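(* Let $P=(-1,0)$ and define $u=(u_1,u_2):\overline{B_1}\setminus\{P\}\to\mathbb R^2$ by $u(x)=(1-2|x|,0)$ for $|x|\le 1/2$, and for $0\le\varepsilon\le 1/2$ and $\theta\in[0,2\pi]$, $$u\big((1-\varepsilon)\cos\theta,(1-\varepsilon)\sin\theta\big)=\Big(\min\Big\{\tfrac{1-2\varepsilon}{2\pi\varepsilon}|\pi-\theta|,\,1\Big\},\,0\Big),$$ with the convention that for $\varepsilon=0$ (and $\theta\neq\pi$) the value is $(1,0)$. Let $\gamma:[0,1]\to\mathbb R^2\setminus\{P\}$ be continuous and injective, and let $a_1<b_1<a_2<b_2<\dots<a_N<b_N$ in $[0,1]$ be such that for each $i$, $\gamma((a_i,b_i))\subseteq B_1$ and $\gamma(a_i),\gamma(b_i)\in\partial B_1\setminus\{P\}$. For each $i$ let $\ell_i=\min_{t\in[a_i,b_i]}u_1(\gamma(t))$ and let $A_i$ be the closed arc of $\partial B_1\setminus\{P\}$ with endpoints $\gamma(a_i)$ and $\gamma(b_i)$. If $i\neq j$ and $A_i\subseteq A_j$, then $\ell_j\le\ell_i$.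
   Context: $B_r$ is the open disk of radius $r$ centred at the origin. The map $u$ is continuous on $\overline{B_1}\setminus\{P\}$, takes values in $[0,1]\times\{0\}$, and equals $(1,0)$ on $\partial B_1\setminus\{P\}$. *)

(* Defs.v *)
From Stdlib Require Import Reals Lra ClassicalEpsilon.
From Coquelicot Require Import Coquelicot.
Open Scope R_scope.

Definition pt := (R * R)%type.

Definition nrm (x : pt) : R := sqrt (fst x ^ 2 + snd x ^ 2).

Definition Ppt : pt := (-1, 0).

(* The map u of the paper (defined on the closed unit disc minus P; the value
   outside the closed disc is irrelevant and set to (0,0)). *)
Definition u (x : pt) : pt :=
  let r := nrm x in
  if Rle_dec r (1/2) then (1 - 2 * r, 0)
  else if Rle_dec r 1 then
    if Req_EM_T r 1 then (1, 0)
    else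
      let eps := 1 - r in
      (epsilon (inhabits 0)
         (fun v => exists th, 0 <= th <= 2 * PI /\
            x = ((1 - eps) * cos th, (1 - eps) * sin th) /\
            v = Rmin ((1 - 2 * eps) / (2 * PI * eps) * Rabs (PI - th)) 1), 0)
  else (0, 0).

Definition u1 (x : pt) : R := fst (u x).

Definition IsMinOn (f : R -> R) (a b m : R) : Prop :=
  (exists t, a <= t <= b /\ f t = m) /\ (forall t, a <= t <= b -> m <= f t).

Definition on_arc (p q z : pt) : Prop :=
  exists tp tq t,
    -PI < tp < PI /\ -PI < tq < PI /\
    p = (cos tp, sin tp) /\ q = (cos tq, sin tq) /\
    Rmin tp tq <= t <= Rmax tp tq /\ z = (cos t, sin t).

(* Main.v *)
Require Import Defs.
From Stdlib Require Import Reals Lra Lia Psatz ClassicalEpsilon Classical.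
From Coquelicot Require Import Coquelicot.
Open Scope R_scope.


Definition sq (p : pt) : R := fst p ^ 2 + snd p ^ 2.
Definition psub (p q : pt) : pt := (fst p - fst q, snd p - snd q).
Definition dst (p q : pt) : R := nrm (psub p q).
Definition rat (p q : pt) : pt := (fst q * fst p + snd q * snd p, snd q * fst p - fst q * snd p).
Definition ang (z : pt) : R := 2 * atan (snd z / (nrm z + fst z)).
Definition offcut (z : pt) : Prop := 0 < nrm z + fst z.

Lemma sq_ge0 p : 0 <= sq p.
Proof. unfold sq; nra. Qed.

Lemma nrm_ge0 p : 0 <= nrm p.
Proof. unfold nrm; apply sqrt_pos. Qed.

Lemma nrm_sq p : nrm p * nrm p = sq p.
Proof. unfold nrm; rewrite sqrt_sqrt; [reflexivity| apply sq_ge0]. Qed.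

Lemma nrm_abs_fst p : Rabs (fst p) <= nrm p.
Proof.
  pose proof (nrm_sq p); pose proof (nrm_ge0 p); unfold sq in *.
  unfold Rabs; destruct Rcase_abs; nra.
Qed.

Lemma nrm_abs_snd p : Rabs (snd p) <= nrm p.
Proof.
  pose proof (nrm_sq p); pose proof (nrm_ge0 p); unfold sq in *.
  unfold Rabs; destruct Rcase_abs; nra.
Qed.

Lemma nrm_le_of_sq p a : 0 <= a -> sq p <= a * a -> nrm p <= a.
Proof.
  intros Ha H. pose proof (nrm_sq p); pose proof (nrm_ge0 p). nra.
Qed.

Lemma nrm_ge_of_sq p a : 0 <= a -> a * a <= sq p -> a <= nrm p.
Proof.
  intros Ha H. pose proof (nrm_sq p); pose proof (nrm_ge0 p). nra.
Qed.

Lemma nrm_pos p : p <> (0,0) -> 0 < nrm p.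
Proof.
  intros H. destruct p as [x y]. pose proof (nrm_sq (x,y)); pose proof (nrm_ge0 (x,y)).
  unfold sq in *; simpl in *.
  destruct (Req_dec x 0); destruct (Req_dec y 0); subst; try congruence; nra.
Qed.

Lemma nrm_tri a b : nrm (fst a + fst b, snd a + snd b) <= nrm a + nrm b.
Proof.
  apply nrm_le_of_sq. pose proof (nrm_ge0 a); pose proof (nrm_ge0 b); lra.
  pose proof (nrm_sq a) as Ha; pose proof (nrm_sq b) as Hb; pose proof (nrm_ge0 a); pose proof (nrm_ge0 b).
  unfold sq in *; simpl.
  assert (fst a * fst b + snd a * snd b <= nrm a * nrm b).
  { assert ((fst a * fst b + snd a * snd b)^2 <= (nrm a * nrm b)^2).
    { replace ((nrm a * nrm b)^2) with ((nrm a * nrm a) * (nrm b * nrm b)) by ring.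
      rewrite Ha, Hb. pose proof (pow2_ge_0 (fst a * snd b - snd a * fst b)). nra. }
    assert (0 <= nrm a * nrm b) by (apply Rmult_le_pos; lra).
    destruct (Rle_dec (fst a * fst b + snd a * snd b) (nrm a * nrm b)); auto. nra. }
  nra.
Qed.

Lemma dst_sym p q : dst p q = dst q p.
Proof. unfold dst, nrm, psub; simpl. f_equal; ring. Qed.

Lemma dst_tri p q r : dst p r <= dst p q + dst q r.
Proof.
  unfold dst. replace (psub p r) with (fst (psub p q) + fst (psub q r), snd (psub p q) + snd (psub q r)).
  apply nrm_tri. unfold psub; simpl; f_equal; ring.
Qed.

Lemma dst_sq p q : dst p q * dst p q = (fst p - fst q)^2 + (snd p - snd q)^2.
Proof. unfold dst. rewrite nrm_sq. reflexivity. Qed.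

Lemma dst_ge0 p q : 0 <= dst p q.
Proof. apply nrm_ge0. Qed.

Lemma dst_eq0 p q : dst p q = 0 -> p = q.
Proof.
  intros H. pose proof (dst_sq p q). rewrite H in H0.
  destruct p as [a b], q as [c d]; simpl in *.
  pose proof (pow2_ge_0 (a - c)); pose proof (pow2_ge_0 (b - d)).
  assert ((a-c)^2 = 0) by lra. assert ((b-d)^2 = 0) by lra.
  f_equal; nra.
Qed.

Lemma offcut_nrm_pos z : offcut z -> 0 < nrm z.
Proof.
  unfold offcut; intros H. pose proof (nrm_abs_fst z). pose proof (nrm_ge0 z).
  destruct (Rle_dec 0 (fst z)). rewrite Rabs_pos_eq in H0 by lra. lra.
  rewrite Rabs_left in H0 by lra. lra.
Qed.

Lemma ang_cos_sin z : offcut z -> cos (ang z) * nrm z = fst z /\ sin (ang z) * nrm z = snd z.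
Proof.
  intros H. pose proof (offcut_nrm_pos z H) as Hr. unfold offcut in H.
  pose proof (nrm_sq z) as Hs. unfold sq in Hs.
  set (r := nrm z) in *. set (x := fst z) in *. set (y := snd z) in *.
  unfold ang. fold r x y. set (T := y / (r + x)).
  rewrite cos_2a_cos, sin_2a, cos_atan, sin_atan.
  assert (H1 : 0 < 1 + T ^ 2) by nra.
  assert (Hq: sqrt (1 + T²) * sqrt (1 + T²) = 1 + T^2).
  { rewrite sqrt_sqrt. unfold Rsqr; ring. unfold Rsqr; nra. }
  assert (Hq2 : sqrt (1 + T²) ^ 2 = 1 + T^2) by (rewrite <- Hq; ring).
  assert (Hp: 0 < sqrt (1 + T²)). { apply sqrt_lt_R0. unfold Rsqr; nra. }
  assert (HT : T * (r + x) = y). { unfold T; field; lra. }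
  split.
  - assert (E: 2 * (1 / sqrt (1 + T²)) * (1 / sqrt (1 + T²)) - 1 = (1 - T^2) / (1 + T^2)).
    { field_simplify; [| lra | lra]. rewrite Hq2. field. lra. }
    rewrite E. apply (Rmult_eq_reg_r ((1 + T^2) * (r + x))); [| nra].
    field_simplify; [| lra]. 
    assert (y * y = (T*(r+x))*(T*(r+x))) by (rewrite HT; ring).
    assert (K: T^2*(r+x) = r - x). { apply (Rmult_eq_reg_l (r+x)); [|lra]. nra. }
    assert (K2: (r+x)*(T^2*(r+x)) = (r+x)*(r-x)) by (rewrite K; ring). nra.
  - assert (E: 2 * (T / sqrt (1 + T²)) * (1 / sqrt (1 + T²)) = 2 * T / (1 + T^2)).
    { field_simplify; [| lra | lra]. rewrite Hq2. field. lra. }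
    rewrite E. apply (Rmult_eq_reg_r ((1 + T^2) * (r + x))); [| nra].
    field_simplify; [| lra].
    assert (y * y = (T*(r+x))*(T*(r+x))) by (rewrite HT; ring).
    assert (K: T^2*(r+x) = r - x). { apply (Rmult_eq_reg_l (r+x)); [|lra]. nra. }
    assert (K2: T*(r+x)*(T^2*(r+x)) = T*(r+x)*(r-x)) by (rewrite K; ring). rewrite <- HT. nra.
Qed.

Lemma ang_bound z : - PI < ang z < PI.
Proof. unfold ang. pose proof (atan_bound (snd z / (nrm z + fst z))). lra. Qed.

Lemma cos1_0 x : cos x = 1 -> -2*PI < x < 2*PI -> x = 0.
Proof.
  intros H [H1 H2]. pose proof PI_RGT_0.
  destruct (Rtotal_order x 0) as [Hn|[Hz|Hp]]; auto.
  - destruct (Rle_dec (-PI) x).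
    + assert (-x = 0). { apply cos_inj; try lra. rewrite cos_neg, H, cos_0. reflexivity. } lra.
    + assert (2*PI + x = 0). { apply cos_inj; try lra.
        rewrite cos_plus, cos_2PI, sin_2PI, H, cos_0. ring. } lra.
  - destruct (Rle_dec x PI).
    + assert (x = 0). { apply cos_inj; try lra. rewrite H, cos_0. reflexivity. } lra.
    + assert (2*PI - x = 0). { apply cos_inj; try lra.
        rewrite cos_minus, cos_2PI, sin_2PI, H, cos_0. ring. } lra.
Qed.

Lemma cos1_3 x : cos x = 1 -> -4*PI < x < 4*PI -> x = -2*PI \/ x = 0 \/ x = 2*PI.
Proof.
  intros H Hr. pose proof PI_RGT_0.
  destruct (Rlt_dec x (-2*PI)).
  - left. assert (x + 2*PI = 0); [|lra]. apply cos1_0; [|lra].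
    rewrite cos_plus, cos_2PI, sin_2PI, H. ring.
  - destruct (Rgt_dec x (2*PI)).
    + right; right. assert (x - 2*PI = 0); [|lra]. apply cos1_0; [|lra].
      rewrite cos_minus, cos_2PI, sin_2PI, H. ring.
    + destruct (Req_dec x (-2*PI)); [left; auto|].
      destruct (Req_dec x (2*PI)); [right; right; auto|].
      right; left. apply cos1_0; auto; lra.
Qed.

Lemma ang_unique z t : offcut z -> -PI < t < PI ->
  cos t * nrm z = fst z -> sin t * nrm z = snd z -> ang z = t.
Proof.
  intros Hz Ht Hc Hs. pose proof (ang_cos_sin z Hz) as [Ac As].
  pose proof (offcut_nrm_pos z Hz) as Hr. pose proof (nrm_sq z) as Hq. unfold sq in Hq.
  assert (cos (ang z - t) = 1).
  { rewrite cos_minus. apply (Rmult_eq_reg_r (nrm z * nrm z)); [|nra].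
    transitivity ((cos (ang z) * nrm z) * (cos t * nrm z) + (sin (ang z) * nrm z) * (sin t * nrm z)); [ring|].
    rewrite Ac, As, Hc, Hs, Hq. ring. }
  pose proof (ang_bound z). assert (ang z - t = 0); [|lra]. apply cos1_0; auto; lra.
Qed.

Lemma nrm_unit t : nrm (cos t, sin t) = 1.
Proof. unfold nrm; cbn [fst snd].
  replace (cos t ^ 2 + sin t ^ 2) with 1 by (rewrite <- (sin2_cos2 t); unfold Rsqr; ring).
  apply sqrt_1. Qed.

Lemma ang_unit t : -PI < t < PI -> ang (cos t, sin t) = t.
Proof.
  intros Ht. apply ang_unique; simpl; rewrite ?nrm_unit; try ring; auto.
  unfold offcut; simpl; rewrite nrm_unit.
  destruct (Rle_dec (-1) (cos t)) as [h|h]; [|pose proof (COS_bound t); lra].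
  destruct (Req_dec (cos t) (-1)); [|lra].
  exfalso. assert (t + PI = 0 \/ t - PI = 0).
  { destruct (Rle_dec 0 t).
    - right. apply cos1_0; [|lra]. rewrite cos_minus, cos_PI, sin_PI, H. ring.
    - left. apply cos1_0; [|lra]. rewrite cos_plus, cos_PI, sin_PI, H. ring. }
  lra.
Qed.

Lemma ang_conj z : offcut z -> ang (fst z, - snd z) = - ang z.
Proof.
  intros Hz. unfold ang; simpl.
  replace (nrm (fst z, - snd z)) with (nrm z).
  replace (- snd z / (nrm z + fst z)) with (- (snd z / (nrm z + fst z))) by (unfold Rdiv; ring).
  rewrite atan_opp. ring.
  unfold nrm; simpl. f_equal. ring.
Qed.

Definition C1 (f : R -> R) : Prop := forall x, continuity_pt f x.
Definition pc (p : R -> pt) : Prop := C1 (fun s => fst (p s)) /\ C1 (fun s => snd (p s)).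

Lemma C1_plus f g : C1 f -> C1 g -> C1 (fun x => f x + g x).
Proof. intros Hf Hg x. exact (continuity_pt_plus f g x (Hf x) (Hg x)). Qed.
Lemma C1_minus f g : C1 f -> C1 g -> C1 (fun x => f x - g x).
Proof. intros Hf Hg x. exact (continuity_pt_minus f g x (Hf x) (Hg x)). Qed.
Lemma C1_mult f g : C1 f -> C1 g -> C1 (fun x => f x * g x).
Proof. intros Hf Hg x. exact (continuity_pt_mult f g x (Hf x) (Hg x)). Qed.
Lemma C1_opp f : C1 f -> C1 (fun x => - f x).
Proof. intros Hf x. exact (continuity_pt_opp f x (Hf x)). Qed.
Lemma C1_const c : C1 (fun _ => c).
Proof. intros x. apply continuity_pt_const. intros a b; reflexivity. Qed.
Lemma C1_id : C1 (fun x => x).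
Proof. intros x. apply derivable_continuous_pt. apply derivable_pt_id. Qed.
Lemma C1_comp f g : C1 f -> C1 g -> C1 (fun x => g (f x)).
Proof. intros Hf Hg x. exact (continuity_pt_comp f g x (Hf x) (Hg (f x))). Qed.
Lemma C1_div f g : C1 f -> C1 g -> (forall x, g x <> 0) -> C1 (fun x => f x / g x).
Proof. intros Hf Hg Hn x. exact (continuity_pt_div f g x (Hf x) (Hg x) (Hn x)). Qed.
Lemma C1_sqrt f : C1 f -> (forall x, 0 <= f x) -> C1 (fun x => sqrt (f x)).
Proof. intros Hf Hp x. apply (continuity_pt_comp f sqrt x (Hf x)). apply continuity_pt_sqrt. auto. Qed.
Lemma C1_atan f : C1 f -> C1 (fun x => atan (f x)).
Proof. intros Hf. apply (C1_comp f atan Hf). intros y. apply derivable_continuous_pt, derivable_pt_atan. Qed.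
Lemma C1_cos f : C1 f -> C1 (fun x => cos (f x)).
Proof. intros Hf. apply (C1_comp f cos Hf). intros y. apply continuity_cos. Qed.
Lemma C1_sin f : C1 f -> C1 (fun x => sin (f x)).
Proof. intros Hf. apply (C1_comp f sin Hf). intros y. apply continuity_sin. Qed.
Lemma C1_abs f : C1 f -> C1 (fun x => Rabs (f x)).
Proof. intros Hf. apply (C1_comp f Rabs Hf). intros y. apply Rcontinuity_abs. Qed.
Lemma C1_pow2 f : C1 f -> C1 (fun x => f x ^ 2).
Proof. intros Hf. eapply (C1_comp f (fun y => y ^ 2) Hf). intros y.
  apply derivable_continuous_pt. apply derivable_pt_pow. Qed.

Lemma C1_nrm p : pc p -> C1 (fun s => nrm (p s)).
Proof.
  intros [H1 H2]. unfold nrm. apply C1_sqrt.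
  apply C1_plus; apply C1_pow2; auto. intros x. pose proof (sq_ge0 (p x)). unfold sq in H. auto.
Qed.

Lemma C1_ang Z : pc Z -> (forall s, offcut (Z s)) -> C1 (fun s => ang (Z s)).
Proof.
  intros HZ Ho. unfold ang. apply C1_mult. apply C1_const. apply C1_atan.
  apply C1_div. apply HZ. apply C1_plus. apply C1_nrm; auto. apply HZ.
  intros x. specialize (Ho x). unfold offcut in Ho. lra.
Qed.

Definition clamp (s : R) : R := let m := (1 + s - Rabs (1 - s)) / 2 in (m + Rabs m) / 2.

Lemma clamp_C1 : C1 clamp.
Proof.
  unfold clamp. apply C1_div; [| apply C1_const | intros; lra].
  apply C1_plus. apply C1_div; [| apply C1_const | intros; lra].
  apply C1_minus. apply C1_plus. apply C1_const. apply C1_id. apply C1_abs. apply C1_minus. apply C1_const. apply C1_id.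
  apply C1_abs. apply C1_div; [| apply C1_const | intros; lra].
  apply C1_minus. apply C1_plus. apply C1_const. apply C1_id. apply C1_abs. apply C1_minus. apply C1_const. apply C1_id.
Qed.

Lemma clamp_range s : 0 <= clamp s <= 1.
Proof.
  unfold clamp. destruct (Rle_dec s 1).
  - rewrite (Rabs_pos_eq (1 - s)) by lra. replace ((1 + s - (1 - s)) / 2) with s by field.
    unfold Rabs; destruct Rcase_abs; lra.
  - rewrite (Rabs_left (1 - s)) by lra. replace ((1 + s - - (1 - s)) / 2) with 1 by field.
    rewrite Rabs_pos_eq by lra. lra.
Qed.

Lemma clamp_id s : 0 <= s <= 1 -> clamp s = s.
Proof.
  intros H. unfold clamp. rewrite (Rabs_pos_eq (1 - s)) by lra. replace ((1 + s - (1 - s)) / 2) with s by field.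
  rewrite Rabs_pos_eq by lra. field.
Qed.

Lemma cos1_sin0 x : cos x = 1 -> sin x = 0.
Proof. intros H. pose proof (sin2_cos2 x). rewrite H in H0. unfold Rsqr in H0. nra. Qed.

Lemma const_cos1 g : C1 g -> (forall s, 0 <= s <= 1 -> cos (g s) = 1) -> g 0 = g 1.
Proof.
  intros Hg Hc. pose proof PI_RGT_0.
  assert (Hcont: continuity g) by (intros x; apply Hg).
  destruct (Rtotal_order (g 0) (g 1)) as [Hl|[He|Hl]]; auto.
  - set (h := Rmin (g 1 - g 0) PI).
    assert (Hh : 0 < h <= PI). { unfold h, Rmin; destruct Rle_dec; lra. }
    assert (Hh2 : h <= g 1 - g 0). { unfold h; apply Rmin_l. }
    destruct (IVT_cor (fun s => g s - (g 0 + h)) 0 1) as [z [Hz Hgz]].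
    { intros x. apply continuity_pt_minus. apply Hg. apply continuity_pt_const. intros a b; auto. }
    lra. nra.
    assert (cos h = 1).
    { replace h with (g z - g 0) by lra. rewrite cos_minus, (Hc z Hz), (Hc 0 ltac:(lra)), (cos1_sin0 _ (Hc 0 ltac:(lra))). ring. }
    assert (h = 0) by (apply cos1_0; auto; lra). lra.
  - set (h := Rmin (g 0 - g 1) PI).
    assert (Hh : 0 < h <= PI). { unfold h, Rmin; destruct Rle_dec; lra. }
    assert (Hh2 : h <= g 0 - g 1). { unfold h; apply Rmin_l. }
    destruct (IVT_cor (fun s => g s - (g 0 - h)) 0 1) as [z [Hz Hgz]].
    { intros x. apply continuity_pt_minus. apply Hg. apply continuity_pt_const. intros a b; auto. }
    lra. nra.
    assert (cos h = 1).
    { replace h with (g 0 - g z) by lra. rewrite cos_minus, (Hc z Hz), (Hc 0 ltac:(lra)), (cos1_sin0 _ (Hc 0 ltac:(lra))). ring. }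
    assert (h = 0) by (apply cos1_0; auto; lra). lra.
Qed.

Fixpoint sumw (f : nat -> R) (n : nat) : R :=
  match n with O => 0 | S m => sumw f m + f m end.
Definition stepang (w a b : pt) : R := ang (rat (psub a w) (psub b w)).
Definition ws (v : nat -> pt) (M : nat) (w : pt) : R :=
  sumw (fun k => stepang w (v k) (v (S k))) M.
Definition valid (w a b : pt) : Prop := dst b a < dst a w.

Lemma rat_nrm p q : nrm (rat p q) = nrm p * nrm q.
Proof.
  unfold nrm, rat; simpl. rewrite <- sqrt_mult by (apply (sq_ge0 p) || apply (sq_ge0 q)).
  f_equal. ring.
Qed.

Lemma valid_props w a b : valid w a b ->
  offcut (rat (psub a w) (psub b w)) /\ 0 < nrm (psub a w) /\ 0 < nrm (psub b w) /\ 0 < fst (rat (psub a w) (psub b w)).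
Proof.
  unfold valid, dst. intros H.
  pose proof (nrm_ge0 (psub b a)) as H0.
  assert (Ha : 0 < nrm (psub a w)) by lra.
  assert (Hb : nrm (psub a w) <= nrm (psub b a) + nrm (psub b w)).
  { replace (psub a w) with (fst (psub a b) + fst (psub b w), snd (psub a b) + snd (psub b w)).
    replace (nrm (psub b a)) with (nrm (psub a b)). apply nrm_tri.
    unfold nrm, psub; simpl; f_equal; ring. unfold psub; simpl; f_equal; ring. }
  assert (0 < fst (rat (psub a w) (psub b w))); [|split; [|split; [lra|split; [lra|auto]]]].
  2:{ unfold offcut. pose proof (nrm_ge0 (rat (psub a w) (psub b w))). lra. }
  assert (Hs : sq (psub b a) < sq (psub a w)).
  { rewrite <- !nrm_sq. pose proof (nrm_ge0 (psub b a)). nra. }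
  unfold sq, rat, psub in *; simpl in *.
  pose proof (pow2_ge_0 (fst a - fst w + (fst b - fst a))).
  pose proof (pow2_ge_0 (snd a - snd w + (snd b - snd a))).
  nra.
Qed.

Lemma ws_S v M w : ws v (S M) w = ws v M w + stepang w (v M) (v (S M)).
Proof. reflexivity. Qed.

Lemma ws_invariant v M w : (forall k, (k < M)%nat -> valid w (v k) (v (S k))) ->
  forall n, (n <= M)%nat ->
  cos (ws v n w) * (nrm (psub (v n) w) * nrm (psub (v O) w)) = fst (rat (psub (v O) w) (psub (v n) w)) /\
  sin (ws v n w) * (nrm (psub (v n) w) * nrm (psub (v O) w)) = snd (rat (psub (v O) w) (psub (v n) w)).
Proof.
  intros Hv n. induction n as [|n IH]; intros Hn.
  - replace (ws v 0 w) with 0 by reflexivity. rewrite cos_0, sin_0. rewrite Rmult_1_l, Rmult_0_l. split.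
    + rewrite nrm_sq. unfold sq, rat. simpl. ring.
    + unfold rat; simpl. ring.
  - destruct (IH ltac:(lia)) as [Ic Is].
    destruct (valid_props _ _ _ (Hv n ltac:(lia))) as [Ho [Hpn [Hpn1 _]]].
    destruct (ang_cos_sin _ Ho) as [Ac As]. rewrite rat_nrm in Ac, As.
    rewrite ws_S. unfold stepang at 1 2.
    set (a := ang (rat (psub (v n) w) (psub (v (S n)) w))) in *.
    set (S0 := ws v n w) in *.
    set (p0 := psub (v O) w) in *. set (pn := psub (v n) w) in *. set (pm := psub (v (S n)) w) in *.
    pose proof (nrm_sq pn) as Hq. unfold sq in Hq.
    rewrite cos_plus, sin_plus. split.
    + apply (Rmult_eq_reg_r (nrm pn * nrm pn)); [| nra].
      transitivity ((cos S0 * (nrm pn * nrm p0)) * (cos a * (nrm pn * nrm pm)) - (sin S0 * (nrm pn * nrm p0)) * (sin a * (nrm pn * nrm pm))); [ring|].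
      rewrite Ic, Is, Ac, As, Hq. unfold rat; simpl; ring.
    + apply (Rmult_eq_reg_r (nrm pn * nrm pn)); [| nra].
      transitivity ((sin S0 * (nrm pn * nrm p0)) * (cos a * (nrm pn * nrm pm)) + (cos S0 * (nrm pn * nrm p0)) * (sin a * (nrm pn * nrm pm))); [ring|].
      rewrite Ic, Is, Ac, As, Hq. unfold rat; simpl; ring.
Qed.

Lemma ws_closed v M w : (0 < M)%nat -> v M = v O -> (forall k, (k < M)%nat -> valid w (v k) (v (S k))) ->
  cos (ws v M w) = 1.
Proof.
  intros HM Hc Hv. destruct (ws_invariant v M w Hv M (le_n M)) as [Ic _].
  rewrite Hc in Ic. rewrite nrm_sq in Ic.
  destruct (valid_props _ _ _ (Hv O HM)) as [_ [Hp _]].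
  pose proof (nrm_sq (psub (v O) w)).
  apply (Rmult_eq_reg_r (sq (psub (v O) w))). rewrite Ic. unfold sq, rat; simpl; ring.
  rewrite <- H. nra.
Qed.

Lemma pc_comp_clamp w : pc w -> pc (fun s => w (clamp s)).
Proof. intros [H1 H2]. split; apply (C1_comp clamp (fun s => _ (w s)) clamp_C1); auto. Qed.

Lemma C1_stepang (w : R -> pt) a b : pc w -> (forall s, valid (w s) a b) ->
  C1 (fun s => stepang (w s) a b).
Proof.
  intros [H1 H2] Hv. unfold stepang. apply C1_ang.
  - unfold rat, psub; split; simpl.
    + apply C1_plus; apply C1_mult; (apply C1_minus; [apply C1_const | auto]).
    + apply C1_minus; apply C1_mult; (apply C1_minus; [apply C1_const | auto]).
  - intros s. apply (valid_props _ _ _ (Hv s)).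
Qed.

Lemma ws_path v M (w : R -> pt) : (0 < M)%nat -> v M = v O -> pc w ->
  (forall s, 0 <= s <= 1 -> forall k, (k < M)%nat -> valid (w s) (v k) (v (S k))) ->
  ws v M (w 0) = ws v M (w 1).
Proof.
  intros HM Hc Hw Hv.
  set (wc := fun s => w (clamp s)).
  assert (Hwc : pc wc) by (apply pc_comp_clamp; auto).
  assert (Hvc : forall s k, (k < M)%nat -> valid (wc s) (v k) (v (S k))).
  { intros s k Hk. apply Hv; auto. apply clamp_range. }
  assert (HC : forall n, (n <= M)%nat -> C1 (fun s => ws v n (wc s))).
  { induction n; intros Hn.
    - unfold ws; simpl. apply C1_const.
    - unfold ws; simpl. apply C1_plus. apply IHn; lia.
      apply C1_stepang; [auto | intros s; apply Hvc; lia]. }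
  pose proof (const_cos1 (fun s => ws v M (wc s)) (HC M (le_n M))) as K.
  unfold wc in K. rewrite (clamp_id 0), (clamp_id 1) in K by lra. apply K.
  intros s Hs. apply ws_closed; auto. intros k Hk. apply Hvc; auto.
Qed.

Definition cmul (p u : pt) : pt := (fst p * fst u - snd p * snd u, fst p * snd u + snd p * fst u).
Definition comb (l : R) (p q : pt) : pt := ((1 - l) * fst p + l * fst q, (1 - l) * snd p + l * snd q).

Lemma offcut_of z : ~ (snd z = 0 /\ fst z <= 0) -> offcut z.
Proof.
  intros H. unfold offcut. pose proof (nrm_sq z) as Hq. pose proof (nrm_ge0 z). unfold sq in Hq.
  destruct (Req_dec (snd z) 0) as [Hy|Hy].
  - assert (fst z > 0) by (destruct (Rle_dec (fst z) 0); [exfalso; tauto | lra]). lra.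
  - assert (0 < snd z ^ 2) by (apply pow2_gt_0; auto).
    destruct (Rle_dec 0 (fst z)). nra.
    assert (nrm z > - fst z) by nra. lra.
Qed.

Lemma ang_sign_pos z : offcut z -> PI / 2 < ang z -> fst z < 0 /\ 0 < snd z.
Proof.
  intros Ho Ha. destruct (ang_cos_sin z Ho) as [Hc Hs]. pose proof (offcut_nrm_pos z Ho).
  pose proof (ang_bound z).
  assert (cos (ang z) < 0) by (apply cos_lt_0; lra).
  assert (0 < sin (ang z)) by (apply sin_gt_0; lra). nra.
Qed.

Lemma ang_sign_neg z : offcut z -> ang z < - (PI / 2) -> fst z < 0 /\ snd z < 0.
Proof.
  intros Ho Ha. destruct (ang_cos_sin z Ho) as [Hc Hs]. pose proof (offcut_nrm_pos z Ho).
  pose proof (ang_bound z).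
  assert (cos (ang z) < 0) by (rewrite <- cos_neg; apply cos_lt_0; lra).
  assert (sin (ang z) < 0) by (rewrite <- (Ropp_involutive (ang z)), sin_neg; 
     assert (0 < sin (- ang z)) by (apply sin_gt_0; lra); lra). nra.
Qed.

Lemma ang_cos_pos z : offcut z -> 0 < fst z -> - (PI/2) < ang z < PI / 2.
Proof.
  intros Ho Hx. destruct (ang_cos_sin z Ho) as [Hc Hs]. pose proof (offcut_nrm_pos z Ho).
  pose proof (ang_bound z). pose proof PI_RGT_0. split.
  - destruct (Rlt_dec (- (PI/2)) (ang z)); auto.
    assert (cos (ang z) <= 0); [|nra].
    destruct (Req_dec (ang z) (- (PI/2))). rewrite H2, cos_neg, cos_PI2. lra.
    rewrite <- cos_neg. left. apply cos_lt_0; lra.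
  - destruct (Rlt_dec (ang z) (PI/2)); auto.
    assert (cos (ang z) <= 0); [|nra].
    destruct (Req_dec (ang z) (PI/2)). rewrite H2, cos_PI2. lra.
    left. apply cos_lt_0; lra.
Qed.

Lemma cmul_nrm p u : nrm u = 1 -> nrm (cmul p u) = nrm p.
Proof.
  intros Hu. pose proof (nrm_sq u) as Hq. rewrite Hu in Hq. unfold sq in Hq.
  unfold nrm, cmul; cbn [fst snd]. f_equal.
  replace ((fst p * fst u - snd p * snd u) ^ 2 + (fst p * snd u + snd p * fst u) ^ 2)
    with ((fst p ^ 2 + snd p ^ 2) * (fst u ^ 2 + snd u ^ 2)) by ring.
  rewrite <- Hq. ring.
Qed.

Lemma cmul_comb l p q u : cmul (comb l p q) u = comb l (cmul p u) (cmul q u).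
Proof. unfold cmul, comb; cbn [fst snd]; f_equal; ring. Qed.

Lemma cross_help (za zb : pt) : fst za < 0 -> fst zb < 0 -> snd za * snd zb < 0 ->
  exists l, 0 <= l <= 1 /\ snd (comb l za zb) = 0 /\ fst (comb l za zb) <= 0.
Proof.
  intros Ha Hb Hy. destruct za as [xa ya], zb as [xb yb]; cbn [fst snd] in *.
  assert (ya - yb <> 0) by (intro; assert (ya = yb) by lra; subst; nra).
  exists (ya / (ya - yb)). unfold comb; cbn [fst snd]. split; [|split].
  - destruct (Rlt_dec 0 ya).
    + assert (yb < 0) by nra. split. apply Rdiv_le_0_compat; lra.
      apply (Rmult_le_reg_r (ya - yb)); [lra|]. unfold Rdiv; rewrite Rmult_assoc, Rinv_l; lra.
    + assert (ya < 0) by (destruct (Req_dec ya 0); [subst; nra | lra]). assert (0 < yb) by nra.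
      replace (ya / (ya - yb)) with ((- ya) / (yb - ya)) by (field; lra). split.
      apply Rdiv_le_0_compat; lra.
      apply (Rmult_le_reg_r (yb - ya)); [lra|]. unfold Rdiv; rewrite Rmult_assoc, Rinv_l; lra.
  - field. auto.
  - assert (0 <= ya / (ya - yb) <= 1).
    { destruct (Rlt_dec 0 ya).
      + assert (yb < 0) by nra. split. apply Rdiv_le_0_compat; lra.
        apply (Rmult_le_reg_r (ya - yb)); [lra|]. unfold Rdiv; rewrite Rmult_assoc, Rinv_l; lra.
      + assert (ya < 0) by (destruct (Req_dec ya 0); [subst; nra | lra]). assert (0 < yb) by nra.
        replace (ya / (ya - yb)) with ((- ya) / (yb - ya)) by (field; lra). split.
        apply Rdiv_le_0_compat; lra.
        apply (Rmult_le_reg_r (yb - ya)); [lra|]. unfold Rdiv; rewrite Rmult_assoc, Rinv_l; lra. }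
    nra.
Qed.

Lemma cut_step w a b u : nrm u = 1 -> valid w a b ->
  (forall l, 0 <= l <= 1 -> ~ (snd (cmul (comb l (psub a w) (psub b w)) u) = 0 /\
                               fst (cmul (comb l (psub a w) (psub b w)) u) <= 0)) ->
  stepang w a b = ang (cmul (psub b w) u) - ang (cmul (psub a w) u).
Proof.
  intros Hu Hv Hseg. pose proof PI_RGT_0.
  set (pa := psub a w) in *. set (pb := psub b w) in *.
  assert (Ea : comb 0 pa pb = pa) by (unfold comb; destruct pa; simpl; f_equal; ring).
  assert (Eb : comb 1 pa pb = pb) by (unfold comb; destruct pb; simpl; f_equal; ring).
  assert (Oa : offcut (cmul pa u)) by (apply offcut_of; rewrite <- Ea; apply Hseg; lra).
  assert (Ob : offcut (cmul pb u)) by (apply offcut_of; rewrite <- Eb; apply Hseg; lra).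
  destruct (valid_props w a b Hv) as [Or [Hpa [Hpb _]]]. fold pa pb in Or, Hpa, Hpb.
  destruct (ang_cos_sin _ Oa) as [Ca Sa]. destruct (ang_cos_sin _ Ob) as [Cb Sb].
  destruct (ang_cos_sin _ Or) as [Cr Sr].
  rewrite cmul_nrm in Ca, Sa, Cb, Sb by auto. rewrite rat_nrm in Cr, Sr.
  pose proof (nrm_sq u) as Hq. rewrite Hu in Hq. unfold sq in Hq.
  unfold stepang. fold pa pb.
  set (A := ang (cmul pa u)) in *. set (B := ang (cmul pb u)) in *. set (Rr := ang (rat pa pb)) in *.
  assert (HR : - (PI/2) < Rr < PI/2).
  { apply ang_cos_pos; auto. apply (valid_props w a b Hv). }
  assert (Hpp : 0 < nrm pa * nrm pb) by (apply Rmult_lt_0_compat; lra).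
  assert (Hc : cos (B - A - Rr) = 1).
  { rewrite cos_minus, cos_minus, sin_minus.
    apply (Rmult_eq_reg_r ((nrm pa * nrm pb) * (nrm pa * nrm pb) * (nrm pa * nrm pb))); [| apply Rgt_not_eq; repeat apply Rmult_lt_0_compat; lra].
    transitivity (((cos B * nrm pb) * (cos A * nrm pa) + (sin B * nrm pb) * (sin A * nrm pa)) * (cos Rr * (nrm pa * nrm pb)) * (nrm pa * nrm pb)
      + ((sin B * nrm pb) * (cos A * nrm pa) - (cos B * nrm pb) * (sin A * nrm pa)) * (sin Rr * (nrm pa * nrm pb)) * (nrm pa * nrm pb)); [ring|].
    rewrite Ca, Sa, Cb, Sb, Cr, Sr.
    pose proof (nrm_sq pa) as Qa. pose proof (nrm_sq pb) as Qb. unfold sq in Qa, Qb.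
    transitivity ((fst u ^ 2 + snd u ^ 2) * ((fst pa ^ 2 + snd pa ^ 2) * (fst pb ^ 2 + snd pb ^ 2)) * (nrm pa * nrm pb)).
    - unfold cmul, rat; cbn [fst snd]; ring.
    - rewrite <- Hq, <- Qa, <- Qb; ring. }
  pose proof (ang_bound (cmul pa u)). pose proof (ang_bound (cmul pb u)). fold A B in H0, H1.
  destruct (cos1_3 _ Hc ltac:(lra)) as [E|[E|E]]; [| lra |].
  - (* B - A = Rr - 2PI : A > PI/2, B < -PI/2 *)
    exfalso. destruct (ang_sign_pos _ Oa ltac:(fold A; lra)) as [xa ya].
    destruct (ang_sign_neg _ Ob ltac:(fold B; lra)) as [xb yb].
    destruct (cross_help (cmul pa u) (cmul pb u) xa xb ltac:(nra)) as [l [Hl Hl2]].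
    apply (Hseg l Hl). rewrite cmul_comb. auto.
  - exfalso. destruct (ang_sign_neg _ Oa ltac:(fold A; lra)) as [xa ya].
    destruct (ang_sign_pos _ Ob ltac:(fold B; lra)) as [xb yb].
    destruct (cross_help (cmul pa u) (cmul pb u) xa xb ltac:(nra)) as [l [Hl Hl2]].
    apply (Hseg l Hl). rewrite cmul_comb. auto.
Qed.

Lemma ws_cut v M w u : nrm u = 1 -> v M = v O ->
  (forall k, (k < M)%nat -> valid w (v k) (v (S k))) ->
  (forall k, (k < M)%nat -> forall l, 0 <= l <= 1 ->
     ~ (snd (cmul (comb l (psub (v k) w) (psub (v (S k)) w)) u) = 0 /\
        fst (cmul (comb l (psub (v k) w) (psub (v (S k)) w)) u) <= 0)) ->
  ws v M w = 0.
Proof.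
  intros Hu Hc Hv Hs.
  assert (forall n, (n <= M)%nat -> ws v n w = ang (cmul (psub (v n) w) u) - ang (cmul (psub (v O) w) u)).
  { induction n; intros Hn. replace (ws v 0 w) with 0 by reflexivity. ring.
    rewrite ws_S, IHn by lia. rewrite cut_step with (u := u); [ring | auto | auto | apply Hs; lia]. }
  rewrite H, Hc by lia. ring.
Qed.

Lemma cmul_axis z u : fst u ^ 2 + snd u ^ 2 = 1 -> snd (cmul z u) = 0 ->
  z = (fst (cmul z u) * fst u, - fst (cmul z u) * snd u).
Proof.
  destruct z as [zx zy], u as [ux uy]. unfold cmul; cbn [fst snd]. intros Hq H.
  assert (uy * (zx * uy + zy * ux) = 0) by (rewrite H; ring).
  assert (ux * (zx * uy + zy * ux) = 0) by (rewrite H; ring).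
  assert (zx * (ux ^ 2 + uy ^ 2) = zx) by (rewrite Hq; ring).
  assert (zy * (ux ^ 2 + uy ^ 2) = zy) by (rewrite Hq; ring).
  f_equal; nra.
Qed.

Lemma seg_of_dist w a b u d : nrm u = 1 ->
  (forall m, 0 <= m -> d <= dst a (fst w - m * fst u, snd w + m * snd u)) -> dst b a < d ->
  forall l, 0 <= l <= 1 ->
    ~ (snd (cmul (comb l (psub a w) (psub b w)) u) = 0 /\ fst (cmul (comb l (psub a w) (psub b w)) u) <= 0).
Proof.
  intros Hu Hd Hb l Hl [H1 H2].
  pose proof (nrm_sq u) as Hq. rewrite Hu in Hq. unfold sq in Hq.
  set (z := comb l (psub a w) (psub b w)) in *.
  set (m := - fst (cmul z u)).
  assert (Ez : z = (- m * fst u, m * snd u)).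
  { unfold m. rewrite (cmul_axis z u) at 1 by lra. f_equal; ring. }
  specialize (Hd m ltac:(unfold m; lra)).
  assert (dst a (fst w - m * fst u, snd w + m * snd u) = l * dst b a).
  { assert (E2 : (fst w - m * fst u, snd w + m * snd u) = ((1-l) * fst a + l * fst b, (1-l) * snd a + l * snd b)).
    { assert (fst z = - m * fst u) by (rewrite Ez; reflexivity).
      assert (snd z = m * snd u) by (rewrite Ez; reflexivity).
      unfold z, comb, psub in *; cbn [fst snd] in *. f_equal; lra. }
    rewrite E2. unfold dst, nrm, psub; cbn [fst snd].
    match goal with |- sqrt ?X = _ => replace X with (l ^ 2 * ((fst b - fst a) ^ 2 + (snd b - snd a) ^ 2)) by ring end.
    rewrite sqrt_mult_alt by (apply pow2_ge_0). rewrite sqrt_pow2 by lra. reflexivity. }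
  pose proof (dst_ge0 b a). nra.
Qed.

Definition samp (f : R -> pt) (N k : nat) : pt := f (INR k / INR N).

Lemma dst_le_abs p q : dst p q <= Rabs (fst p - fst q) + Rabs (snd p - snd q).
Proof.
  unfold dst, psub. apply nrm_le_of_sq. pose proof (Rabs_pos (fst p - fst q)); pose proof (Rabs_pos (snd p - snd q)); lra.
  unfold sq; cbn [fst snd].
  assert (E1 : (fst p - fst q) ^ 2 = Rabs (fst p - fst q) ^ 2) by (unfold Rabs; destruct Rcase_abs; ring).
  assert (E2 : (snd p - snd q) ^ 2 = Rabs (snd p - snd q) ^ 2) by (unfold Rabs; destruct Rcase_abs; ring).
  rewrite E1, E2.
  pose proof (Rabs_pos (fst p - fst q)); pose proof (Rabs_pos (snd p - snd q)). nra.
Qed.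

Lemma samp_range N k : (0 < N)%nat -> (k <= N)%nat -> 0 <= INR k / INR N <= 1.
Proof.
  intros HN Hk. assert (0 < INR N) by (apply lt_0_INR; lia).
  apply le_INR in Hk. pose proof (pos_INR k). split.
  apply Rdiv_le_0_compat; lra.
  apply (Rmult_le_reg_r (INR N)); auto. unfold Rdiv; rewrite Rmult_assoc, Rinv_l; lra.
Qed.

Lemma mesh (f : R -> pt) : pc f -> forall d, 0 < d -> exists N0, forall N, (N0 <= N)%nat -> (0 < N)%nat ->
  forall k, (k < N)%nat -> dst (samp f N (S k)) (samp f N k) < d.
Proof.
  intros [H1 H2] d Hd.
  destruct (Heine_cor2 (f := fun s => fst (f s)) (a := 0) (b := 1) (fun x _ => H1 x) (mkposreal (d/2) ltac:(lra))) as [d1 Hd1].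
  destruct (Heine_cor2 (f := fun s => snd (f s)) (a := 0) (b := 1) (fun x _ => H2 x) (mkposreal (d/2) ltac:(lra))) as [d2 Hd2].
  simpl in *. destruct (archimed_cor1 (Rmin d1 d2)) as [N0 [HN0 HN0p]].
  { pose proof (cond_pos d1); pose proof (cond_pos d2). unfold Rmin; destruct Rle_dec; lra. }
  exists N0. intros N HN HNp k Hk.
  assert (HNr : 0 < INR N) by (apply lt_0_INR; lia).
  assert (Hstep : Rabs (INR (S k) / INR N - INR k / INR N) < Rmin d1 d2).
  { rewrite S_INR. replace ((INR k + 1) / INR N - INR k / INR N) with (/ INR N) by (field; lra).
    rewrite Rabs_pos_eq by (left; apply Rinv_0_lt_compat; lra).
    apply (Rle_lt_trans _ (/ INR N0)); auto. apply Rinv_le_contravar. apply lt_0_INR; lia. apply le_INR; lia. }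
  unfold samp. eapply Rle_lt_trans. apply dst_le_abs.
  assert (Rmin d1 d2 <= d1) by apply Rmin_l. assert (Rmin d1 d2 <= d2) by apply Rmin_r.
  pose proof (Hd1 (INR (S k) / INR N) (INR k / INR N) (samp_range N (S k) HNp ltac:(lia)) (samp_range N k HNp ltac:(lia)) ltac:(lra)).
  pose proof (Hd2 (INR (S k) / INR N) (INR k / INR N) (samp_range N (S k) HNp ltac:(lia)) (samp_range N k HNp ltac:(lia)) ltac:(lra)).
  lra.
Qed.

Lemma pc_psub_const p (g : R -> pt) : pc g -> pc (fun t => psub p (g t)).
Proof. intros [H1 H2]. unfold psub; split; cbn [fst snd]; apply C1_minus; auto; apply C1_const. Qed.

Lemma C1_dst_r p (g : R -> pt) : pc g -> C1 (fun t => dst p (g t)).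
Proof. intros Hg. unfold dst. apply (C1_nrm (fun t => psub p (g t))). apply pc_psub_const; auto. Qed.

Lemma cont_by_bound (h F : R -> R) x : (forall y, Rabs (h y - h x) <= F y) -> continuity_pt F x -> F x = 0 ->
  continuity_pt h x.
Proof.
  intros Hb HF H0. unfold continuity_pt, continue_in, limit1_in, limit_in in *. simpl in *.
  intros eps He. destruct (HF eps He) as [alp [Ha Hal]]. exists alp; split; auto.
  intros y Hy. specialize (Hal y Hy). unfold Rdist in *. rewrite H0, Rminus_0_r in Hal.
  specialize (Hb y). eapply Rle_lt_trans; [apply Hb|]. eapply Rle_lt_trans; [apply Rle_abs|]. auto.
Qed.

Lemma curve_dist (f g : R -> pt) : pc f -> pc g ->
  (forall s t, 0 <= s <= 1 -> 0 <= t <= 1 -> f s <> g t) ->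
  exists d, 0 < d /\ forall s t, 0 <= s <= 1 -> 0 <= t <= 1 -> d <= dst (f s) (g t).
Proof.
  intros Hf Hg Hne.
  assert (Ex : forall s, exists t, 0 <= t <= 1 /\ forall t', 0 <= t' <= 1 -> dst (f s) (g t) <= dst (f s) (g t')).
  { intros s. destruct (continuity_ab_min (fun t => dst (f s) (g t)) 0 1 ltac:(lra)) as [m [Hm1 Hm2]].
    intros c _. apply C1_dst_r; auto. exists m. split; auto. }
  set (tm := fun s => epsilon (inhabits 0) (fun t => 0 <= t <= 1 /\ forall t', 0 <= t' <= 1 -> dst (f s) (g t) <= dst (f s) (g t'))).
  assert (Htm : forall s, 0 <= tm s <= 1 /\ forall t', 0 <= t' <= 1 -> dst (f s) (g (tm s)) <= dst (f s) (g t')).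
  { intros s. exact (epsilon_spec (inhabits 0) (fun t => 0 <= t <= 1 /\ forall t', 0 <= t' <= 1 -> dst (f s) (g t) <= dst (f s) (g t')) (Ex s)). }
  set (h := fun s => dst (f s) (g (tm s))).
  assert (Hh : forall x, continuity_pt h x).
  { intros x. apply (cont_by_bound h (fun y => dst (f x) (f y))).
    - intros y. unfold h. apply Rabs_le. destruct (Htm x) as [Hx1 Hx2]. destruct (Htm y) as [Hy1 Hy2]. split.
      + pose proof (Hx2 (tm y) Hy1). pose proof (dst_tri (f x) (f y) (g (tm y))). rewrite (dst_sym (f x) (f y)) in *. lra.
      + pose proof (Hy2 (tm x) Hx1). pose proof (dst_tri (f y) (f x) (g (tm x))). rewrite (dst_sym (f y) (f x)) in *. lra.
    - apply C1_dst_r; auto.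
    - unfold dst, psub, nrm. cbn [fst snd]. rewrite !Rminus_eq_0. replace (0^2 + 0^2) with 0 by ring. apply sqrt_0. }
  destruct (continuity_ab_min h 0 1 ltac:(lra) (fun c _ => Hh c)) as [m [Hm1 Hm2]].
  exists (h m). split.
  - unfold h. destruct (Htm m) as [Ht _]. pose proof (dst_ge0 (f m) (g (tm m))).
    destruct H; auto. exfalso. apply (Hne m (tm m) Hm2 Ht). apply dst_eq0. auto.
  - intros s t Hs Ht. eapply Rle_trans. apply (Hm1 s Hs). unfold h. apply Htm; auto.
Qed.

Lemma cos_ne_m1 t : -PI < t < PI -> 0 < 1 + cos t.
Proof.
  intros Ht. destruct (Rle_dec (-1) (cos t)) as [h|h]; [|pose proof (COS_bound t); lra].
  destruct (Req_dec (cos t) (-1)); [|lra].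
  exfalso. assert (t + PI = 0 \/ t - PI = 0).
  { destruct (Rle_dec 0 t).
    - right. apply cos1_0; [|lra]. rewrite cos_minus, cos_PI, sin_PI, H. ring.
    - left. apply cos1_0; [|lra]. rewrite cos_plus, cos_PI, sin_PI, H. ring. }
  lra.
Qed.

Lemma polar x : 0 < nrm x -> exists th, 0 <= th <= 2 * PI /\ x = (nrm x * cos th, nrm x * sin th).
Proof.
  intros Hr. pose proof PI_RGT_0.
  destruct (Rlt_dec 0 (nrm x + fst x)) as [Ho|Ho].
  - destruct (ang_cos_sin x Ho) as [Hc Hs]. pose proof (ang_bound x).
    destruct (Rle_dec 0 (ang x)).
    + exists (ang x). split. lra. destruct x; cbn [fst snd] in *. f_equal; lra.
    + exists (ang x + 2 * PI). split. lra.
      rewrite cos_plus, sin_plus, cos_2PI, sin_2PI. destruct x; cbn [fst snd] in *. f_equal; lra.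
  - pose proof (nrm_abs_fst x). pose proof (nrm_sq x) as Hq. unfold sq in Hq.
    assert (fst x = - nrm x) by (unfold Rabs in H0; destruct Rcase_abs; lra).
    assert (snd x = 0) by (rewrite H1 in Hq; nra).
    exists PI. split. lra. rewrite cos_PI, sin_PI. destruct x; cbn [fst snd] in *. f_equal; lra.
Qed.

Lemma same_angle a b : 0 <= a <= 2 * PI -> 0 <= b <= 2 * PI -> cos a = cos b -> sin a = sin b ->
  Rabs (PI - a) = Rabs (PI - b).
Proof.
  intros Ha Hb Hc Hs. pose proof PI_RGT_0.
  assert (cos (a - b) = 1).
  { rewrite cos_minus, Hc, Hs. pose proof (sin2_cos2 b). unfold Rsqr in H0. lra. }
  destruct (cos1_3 _ H0 ltac:(lra)) as [E|[E|E]].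
  - assert (a = 0) by lra. assert (b = 2*PI) by lra. subst. rewrite (Rabs_pos_eq (PI - 0)), (Rabs_left (PI - 2*PI)); lra.
  - assert (a = b) by lra. subst; reflexivity.
  - assert (b = 0) by lra. assert (a = 2*PI) by lra. subst. rewrite (Rabs_pos_eq (PI - 0)), (Rabs_left (PI - 2*PI)); lra.
Qed.

Definition kk (r : R) : R := (1 - 2 * (1 - r)) / (2 * PI * (1 - r)).

Lemma u1_in x : nrm x <= 1/2 -> u1 x = 1 - 2 * nrm x.
Proof. intros H. unfold u1, u. cbv zeta. destruct (Rle_dec (nrm x) (1/2)); [reflexivity | lra]. Qed.

Lemma u1_bd x : nrm x = 1 -> u1 x = 1.
Proof. intros H. unfold u1, u. cbv zeta. destruct (Rle_dec (nrm x) (1/2)); [lra|].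
  destruct (Rle_dec (nrm x) 1); [|lra]. destruct (Req_EM_T (nrm x) 1); [reflexivity | lra]. Qed.

Lemma u1_out x : 1 < nrm x -> u1 x = 0.
Proof. intros H. unfold u1, u. cbv zeta. destruct (Rle_dec (nrm x) (1/2)); [lra|].
  destruct (Rle_dec (nrm x) 1); [lra|]. reflexivity. Qed.

Lemma u1_ann x th : 1/2 < nrm x < 1 -> 0 <= th <= 2 * PI -> x = (nrm x * cos th, nrm x * sin th) ->
  u1 x = Rmin (kk (nrm x) * Rabs (PI - th)) 1.
Proof.
  intros Hr Hth Hx. unfold u1, u. cbv zeta. destruct (Rle_dec (nrm x) (1/2)); [lra|].
  destruct (Rle_dec (nrm x) 1); [|lra]. destruct (Req_EM_T (nrm x) 1); [lra|]. cbn [fst].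
  set (P := fun v => exists th0, 0 <= th0 <= 2 * PI /\
            x = ((1 - (1 - nrm x)) * cos th0, (1 - (1 - nrm x)) * sin th0) /\
            v = Rmin ((1 - 2 * (1 - nrm x)) / (2 * PI * (1 - nrm x)) * Rabs (PI - th0)) 1).
  assert (Ex : exists v, P v).
  { exists (Rmin ((1 - 2 * (1 - nrm x)) / (2 * PI * (1 - nrm x)) * Rabs (PI - th)) 1). exists th.
    split; auto. split; auto. rewrite Hx at 1. cbn [fst snd]. f_equal; f_equal; ring. }
  destruct (epsilon_spec (inhabits 0) P Ex) as [th0 [Hth0 [Hx0 Hv]]].
  rewrite Hv. unfold kk.
  replace (1 - (1 - nrm x)) with (nrm x) in Hx0 by ring.
  assert (Hxx : (nrm x * cos th0, nrm x * sin th0) = (nrm x * cos th, nrm x * sin th))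
    by (transitivity x; [symmetry; exact Hx0 | exact Hx]).
  injection Hxx. intros E2 E1.
  assert (cos th0 = cos th) by (apply (Rmult_eq_reg_l (nrm x)); lra).
  assert (sin th0 = sin th) by (apply (Rmult_eq_reg_l (nrm x)); lra).
  rewrite (same_angle th0 th); auto.
Qed.

Lemma kk_pos r : 1/2 < r < 1 -> 0 < kk r.
Proof. intros H. unfold kk. pose proof PI_RGT_0. apply Rdiv_lt_0_compat; nra. Qed.

Lemma u1_nonneg x : nrm x < 1 -> 0 <= u1 x.
Proof.
  intros H. destruct (Rle_dec (nrm x) (1/2)). rewrite u1_in; lra.
  destruct (polar x ltac:(lra)) as [th [Hth Hx]].
  rewrite (u1_ann x th) by (auto; lra). pose proof (kk_pos (nrm x) ltac:(lra)).
  unfold Rmin; destruct Rle_dec. pose proof (Rabs_pos (PI - th)). nra. lra.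
Qed.

Lemma u1_le1 x : u1 x <= 1.
Proof.
  destruct (Rle_dec (nrm x) (1/2)). rewrite u1_in by auto. pose proof (nrm_ge0 x). lra.
  destruct (Rlt_dec (nrm x) 1).
  - destruct (polar x ltac:(lra)) as [th [Hth Hx]].
    rewrite (u1_ann x th) by (auto; lra). apply Rmin_r.
  - destruct (Req_dec (nrm x) 1). rewrite u1_bd; lra. rewrite u1_out; lra.
Qed.

Definition cat (p q : nat -> pt) (N : nat) : nat -> pt :=
  fun k => if (k <=? N)%nat then p k else q (k - N)%nat.

Lemma sumw_split f N m : sumw f (N + m) = sumw f N + sumw (fun k => f (N + k)%nat) m.
Proof. induction m. rewrite Nat.add_0_r. simpl. ring. rewrite Nat.add_succ_r. simpl. rewrite IHm. ring. Qed.

Lemma sumw_ext f g n : (forall k, (k < n)%nat -> f k = g k) -> sumw f n = sumw g n.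
Proof. induction n; intros H; simpl. reflexivity. rewrite IHn by (intros; apply H; lia). rewrite H by lia. reflexivity. Qed.

Lemma cat_lo p q N k : (k <= N)%nat -> cat p q N k = p k.
Proof. intros H. unfold cat. destruct (Nat.leb_spec k N); [reflexivity | lia]. Qed.

Lemma cat_hi p q N k : p N = q O -> cat p q N (N + k) = q k.
Proof. intros H. unfold cat. destruct (Nat.leb_spec (N + k) N).
  assert (k = O) by lia. subst. rewrite Nat.add_0_r. auto.
  f_equal. lia. Qed.

Lemma ws_cat p q N w : p N = q O -> ws (cat p q N) (N + N) w = ws p N w + ws q N w.
Proof.
  intros H. unfold ws. rewrite sumw_split. f_equal.
  - apply sumw_ext. intros k Hk. rewrite !cat_lo by lia. reflexivity.
  - apply sumw_ext. intros k Hk. rewrite <- Nat.add_succ_r. rewrite !cat_hi by auto. reflexivity.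
Qed.

Lemma step_cat (P : pt -> pt -> Prop) p q N : p N = q O ->
  (forall k, (k < N)%nat -> P (p k) (p (S k))) -> (forall k, (k < N)%nat -> P (q k) (q (S k))) ->
  forall k, (k < N + N)%nat -> P (cat p q N k) (cat p q N (S k)).
Proof.
  intros H Hp Hq k Hk. destruct (Nat.lt_ge_cases k N).
  - rewrite !cat_lo by lia. apply Hp; auto.
  - replace k with (N + (k - N))%nat by lia. rewrite <- Nat.add_succ_r. rewrite !cat_hi by auto. apply Hq; lia.
Qed.

Lemma ws_ext v v' M w : (forall k, (k <= M)%nat -> v k = v' k) -> ws v M w = ws v' M w.
Proof. intros H. unfold ws. apply sumw_ext. intros k Hk. rewrite !H by lia. reflexivity. Qed.

Lemma sumw_shift f n : sumw f (S n) = f O + sumw (fun k => f (S k)) n.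
Proof. induction n. simpl. ring.
  change (sumw f (S (S n))) with (sumw f (S n) + f (S n)). rewrite IHn. simpl. ring. Qed.

Lemma sumw_rev f n : sumw (fun k => f (n - S k)%nat) n = sumw f n.
Proof.
  induction n. reflexivity.
  rewrite sumw_shift. replace (S n - 1)%nat with n by lia.
  change (sumw (fun k => f (S n - S (S k))%nat) n) with (sumw (fun k => f (n - S k)%nat) n).
  rewrite IHn. simpl. ring.
Qed.

Lemma stepang_swap w a b : valid w a b -> stepang w b a = - stepang w a b.
Proof.
  intros Hv. destruct (valid_props w a b Hv) as [Ho _]. unfold stepang.
  rewrite <- ang_conj by auto. f_equal. unfold rat; cbn [fst snd]. f_equal; ring.
Qed.

Lemma ws_rev p N w : (forall k, (k < N)%nat -> valid w (p k) (p (S k))) ->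
  ws (fun k => p (N - k)%nat) N w = - ws p N w.
Proof.
  intros Hv. unfold ws.
  transitivity (sumw (fun k => (fun m => - stepang w (p m) (p (S m))) (N - S k)%nat) N).
  - apply sumw_ext. intros k Hk. cbn beta. rewrite <- stepang_swap by (apply Hv; lia).
    f_equal; f_equal; lia.
  - rewrite (sumw_rev (fun m => - stepang w (p m) (p (S m))) N). clear Hv. induction N. simpl; ring. simpl. rewrite IHN. ring.
Qed.

Lemma clamp_lip x y : Rabs (clamp y - clamp x) <= Rabs (y - x).
Proof. unfold clamp. cbv zeta. unfold Rabs. repeat destruct Rcase_abs; lra. Qed.

Lemma gamma_cont (gamma : R -> pt) :
  (forall t, 0 <= t <= 1 -> filterlim gamma (within (fun s => 0 <= s <= 1) (locally t)) (locally (gamma t))) ->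
  forall x eps, 0 < eps -> exists del, 0 < del /\ forall y, Rabs (y - x) < del ->
     Rabs (fst (gamma (clamp y)) - fst (gamma (clamp x))) < eps /\ Rabs (snd (gamma (clamp y)) - snd (gamma (clamp x))) < eps.
Proof.
  intros Hc x eps He.
  pose proof (Hc (clamp x) (clamp_range x)) as H.
  pose proof (proj1 (filterlim_locally (F := within (fun s => 0 <= s <= 1) (locally (clamp x))) gamma (gamma (clamp x))) H (mkposreal eps He)) as H1.
  destruct H1 as [del Hd]. exists del. split. apply cond_pos.
  intros y Hy. specialize (Hd (clamp y)).
  assert (Hb : ball (clamp x) del (clamp y)).
  { unfold ball; simpl. unfold AbsRing_ball, abs, minus, plus, opp; simpl.
    replace (clamp y + - clamp x) with (clamp y - clamp x) by ring. pose proof (clamp_lip x y). lra. }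
  specialize (Hd Hb (clamp_range y)).
  destruct (gamma (clamp x)) as [g1 g2], (gamma (clamp y)) as [h1 h2].
  unfold ball in Hd; simpl in Hd. unfold prod_ball, AbsRing_ball, abs, minus, plus, opp in Hd; simpl in Hd.
  exact Hd.
Qed.

Lemma gamma_pc (gamma : R -> pt) :
  (forall t, 0 <= t <= 1 -> filterlim gamma (within (fun s => 0 <= s <= 1) (locally t)) (locally (gamma t))) ->
  pc (fun t => gamma (clamp t)).
Proof.
  intros Hc. split; intros x; unfold continuity_pt, continue_in, limit1_in, limit_in; simpl; intros eps He;
  destruct (gamma_cont gamma Hc x eps He) as [del [Hd Hdd]]; exists del; split; auto;
  intros y [_ Hy]; unfold Rdist in *; apply Hdd; auto.
Qed.

Definition arcf (al be : R) (s : R) : pt := (cos (al + s * be), sin (al + s * be)).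

Lemma arcf_pc al be : pc (arcf al be).
Proof. unfold arcf; split; cbn [fst snd]; [apply C1_cos | apply C1_sin];
  (apply C1_plus; [apply C1_const | apply C1_mult; [apply C1_id | apply C1_const]]). Qed.

Lemma arcf_nrm al be s : nrm (arcf al be s) = 1.
Proof. apply nrm_unit. Qed.

Lemma sumw_const c n : sumw (fun _ => c) n = INR n * c.
Proof. induction n. simpl; ring. rewrite S_INR. simpl. rewrite IHn. ring. Qed.

Lemma ws_arc0 al be N : (0 < N)%nat -> Rabs (be / INR N) < PI ->
  ws (samp (arcf al be) N) N (0, 0) = be.
Proof.
  intros HN Hb. assert (HNr : 0 < INR N) by (apply lt_0_INR; lia).
  unfold ws. transitivity (sumw (fun _ => be / INR N) N).
  - apply sumw_ext. intros k Hk. unfold stepang, samp, arcf, psub, rat. cbn [fst snd].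
    rewrite !Rminus_0_r.
    set (t1 := al + INR k / INR N * be). set (t2 := al + INR (S k) / INR N * be).
    assert (E : t2 = t1 + be / INR N) by (unfold t1, t2; rewrite S_INR; field; lra).
    replace (cos t2 * cos t1 + sin t2 * sin t1, sin t2 * cos t1 - cos t2 * sin t1)
      with (cos (t2 - t1), sin (t2 - t1)) by (rewrite cos_minus, sin_minus; f_equal; ring).
    replace (t2 - t1) with (be / INR N) by lra. apply ang_unit.
    apply Rabs_def2 in Hb. lra.
  - rewrite sumw_const. field. lra.
Qed.

Lemma dst_origin p : dst p (0,0) = nrm p.
Proof. unfold dst, psub; cbn [fst snd]. rewrite !Rminus_0_r. destruct p; reflexivity. Qed.

Lemma nrm_le_dst p q : nrm p <= nrm q + dst p q.
Proof. rewrite <- !dst_origin. pose proof (dst_tri p q (0,0)). rewrite (dst_sym p q) in *. lra. Qed.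

Lemma nrm_scale l p : 0 <= l -> nrm (l * fst p, l * snd p) = l * nrm p.
Proof.
  intros Hl. unfold nrm; cbn [fst snd].
  replace ((l * fst p) ^ 2 + (l * snd p) ^ 2) with (l ^ 2 * (fst p ^ 2 + snd p ^ 2)) by ring.
  rewrite sqrt_mult_alt by apply pow2_ge_0. rewrite sqrt_pow2 by lra. reflexivity.
Qed.

Lemma nrm_polar r th : 0 <= r -> nrm (r * cos th, r * sin th) = r.
Proof. intros H. pose proof (nrm_scale r (cos th, sin th) H). cbn [fst snd] in H0. rewrite H0, nrm_unit. ring. Qed.

Lemma nrm_x0 x : nrm (x, 0) = Rabs x.
Proof. unfold nrm; cbn [fst snd]. replace (x ^ 2 + 0 ^ 2) with (x ^ 2) by ring. rewrite <- sqrt_Rsqr_abs. unfold Rsqr; f_equal; ring. Qed.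

Lemma circle_polar p : nrm p = 1 -> p <> Ppt -> exists t, -PI < t < PI /\ p = (cos t, sin t).
Proof.
  intros H1 H2. assert (Ho : offcut p).
  { unfold offcut. rewrite H1. pose proof (nrm_abs_fst p). rewrite H1 in H.
    destruct (Req_dec (fst p) (-1)); [|unfold Rabs in H; destruct Rcase_abs; lra].
    exfalso. apply H2. pose proof (nrm_sq p) as Hq. rewrite H1 in Hq. unfold sq in Hq.
    rewrite H0 in Hq. destruct p; cbn [fst snd] in *. unfold Ppt. f_equal; auto. nra. }
  exists (ang p). split. pose proof (ang_bound p); lra.
  destruct (ang_cos_sin p Ho) as [Hc Hs]. rewrite H1 in Hc, Hs. destruct p; cbn [fst snd] in *. f_equal; lra.
Qed.

Lemma valid_from (f : R -> pt) N z d : (0 < N)%nat ->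
  (forall s, 0 <= s <= 1 -> d <= dst (f s) z) ->
  (forall k, (k < N)%nat -> dst (samp f N (S k)) (samp f N k) < d) ->
  forall k, (k < N)%nat -> valid z (samp f N k) (samp f N (S k)).
Proof.
  intros HN Hd Hm k Hk. unfold valid. specialize (Hm k Hk).
  pose proof (Hd (INR k / INR N) (samp_range N k HN ltac:(lia))). unfold samp in *. lra.
Qed.

Lemma seg_from (f : R -> pt) N w u d : (0 < N)%nat -> nrm u = 1 ->
  (forall s, 0 <= s <= 1 -> forall m, 0 <= m -> d <= dst (f s) (fst w - m * fst u, snd w + m * snd u)) ->
  (forall k, (k < N)%nat -> dst (samp f N (S k)) (samp f N k) < d) ->
  forall k, (k < N)%nat -> forall l, 0 <= l <= 1 ->
     ~ (snd (cmul (comb l (psub (samp f N k) w) (psub (samp f N (S k)) w)) u) = 0 /\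
        fst (cmul (comb l (psub (samp f N k) w) (psub (samp f N (S k)) w)) u) <= 0).
Proof.
  intros HN Hu Hd Hm k Hk. apply seg_of_dist with (d := d); auto.
  intros m Hm0. apply Hd; auto. apply samp_range; lia.
Qed.

Lemma order_ab (a b : nat -> R) N :
  (forall i, (i < N)%nat -> 0 <= a i /\ a i < b i /\ b i <= 1) ->
  (forall i, (S i < N)%nat -> b i < a (S i)) ->
  forall m n, (m < n)%nat -> (n < N)%nat -> b m < a n.
Proof.
  intros Hab Hba m n Hmn. induction n; intros Hn. lia.
  destruct (Nat.eq_dec m n). subst. apply Hba; auto.
  pose proof (IHn ltac:(lia) ltac:(lia)). pose proof (Hab n ltac:(lia)). pose proof (Hba n Hn). lra.
Qed.

Lemma radial (v : pt) r x y mu : 0 < r -> r * r = x * x + y * y -> nrm v <= 1 -> 1 <= mu ->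
  dst v (x / r, y / r) <= dst v (mu * (x / r), mu * (y / r)).
Proof.
  intros Hr Hq Hv Hmu.
  assert (Hu : (x / r) ^ 2 + (y / r) ^ 2 = 1).
  { replace ((x / r) ^ 2 + (y / r) ^ 2) with ((x * x + y * y) / (r * r)) by (field; lra).
    rewrite <- Hq. field. lra. }
  set (ux := x / r) in *. set (uy := y / r) in *.
  pose proof (nrm_sq v) as Hs. unfold sq in Hs. pose proof (nrm_ge0 v).
  assert (Hvv : fst v ^ 2 + snd v ^ 2 <= 1) by nra.
  assert (Hdot : fst v * ux + snd v * uy <= 1).
  { pose proof (pow2_ge_0 (fst v - ux)); pose proof (pow2_ge_0 (snd v - uy)). nra. }
  assert (dst v (ux, uy) * dst v (ux, uy) <= dst v (mu * ux, mu * uy) * dst v (mu * ux, mu * uy)).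
  { rewrite !dst_sq; cbn [fst snd]. nra. }
  pose proof (dst_ge0 v (ux, uy)). pose proof (dst_ge0 v (mu * ux, mu * uy)). nra.
Qed.

Lemma dst_scale2 l m (p : pt) : m <= l -> dst (l * fst p, l * snd p) (m * fst p, m * snd p) = (l - m) * nrm p.
Proof.
  intros H. unfold dst, psub; cbn [fst snd].
  replace (l * fst p - m * fst p, l * snd p - m * snd p) with ((l - m) * fst p, (l - m) * snd p) by (f_equal; ring).
  apply nrm_scale. lra.
Qed.

Lemma ray_bound x0 w v e d0 lam : nrm x0 = 1 -> 0 < nrm w -> nrm w <= 1 -> dst w x0 <= e -> nrm v <= 1 ->
  d0 <= dst v x0 -> 1 <= lam -> d0 - 2 * e <= dst v (lam * fst w, lam * snd w).
Proof.
  intros Hx0 Hw Hw1' Hwe Hv Hd Hl.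
  set (r := nrm w) in *.
  pose proof (nrm_le_dst x0 w) as T1. rewrite (dst_sym x0 w) in T1. fold r in T1.
  assert (Hw1 : w = (1 * fst w, 1 * snd w)) by (destruct w; cbn [fst snd]; f_equal; ring).
  destruct (Rle_dec (lam * r) 1).
  - assert (dst (lam * fst w, lam * snd w) w = (lam - 1) * r).
    { unfold r. rewrite <- (dst_scale2 lam 1 w) by lra. f_equal. destruct w; cbn [fst snd]; f_equal; ring. }
    pose proof (dst_tri (lam * fst w, lam * snd w) w x0).
    pose proof (dst_tri v (lam * fst w, lam * snd w) x0).
    assert ((lam - 1) * r <= 1 - r) by nra. lra.
  - set (p1 := (fst w / r, snd w / r)).
    assert (Hp1 : p1 = ((/ r) * fst w, (/ r) * snd w)) by (unfold p1; f_equal; unfold Rdiv; ring).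
    assert (dst p1 w = 1 - r).
    { assert (1 <= / r) by (apply (Rmult_le_reg_r r); auto; rewrite Rinv_l; lra).
      rewrite Hp1. transitivity ((/ r - 1) * nrm w).
      rewrite <- (dst_scale2 (/ r) 1 w) by lra. f_equal. destruct w; cbn [fst snd]; f_equal; ring.
      unfold r. field. unfold r in Hw. lra. }
    assert (Hlw : (lam * fst w, lam * snd w) = ((lam * r) * (fst w / r), (lam * r) * (snd w / r))).
    { f_equal; field; lra. }
    pose proof (radial v r (fst w) (snd w) (lam * r) Hw ltac:(unfold r; rewrite nrm_sq; unfold sq; ring) Hv ltac:(lra)).
    rewrite <- Hlw in H0. fold p1 in H0.
    pose proof (dst_tri p1 w x0). pose proof (dst_tri v p1 x0). lra.
Qed.


Lemma samp_0 f N : samp f N 0 = f 0.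
Proof. unfold samp. simpl. unfold Rdiv. rewrite Rmult_0_l. reflexivity. Qed.

Lemma samp_N f N : (0 < N)%nat -> samp f N N = f 1.
Proof. intros H. unfold samp. f_equal. field. apply not_0_INR. lia. Qed.

Lemma Rmin_le_l x y z : x <= z -> Rmin x y <= z.
Proof. intros H. pose proof (Rmin_l x y). lra. Qed.
Lemma Rmin_le_r x y z : y <= z -> Rmin x y <= z.
Proof. intros H. pose proof (Rmin_r x y). lra. Qed.
Lemma Rmin_pos' x y : 0 < x -> 0 < y -> 0 < Rmin x y.
Proof. intros. unfold Rmin; destruct Rle_dec; lra. Qed.

Lemma small_div x n : 5 <= n -> Rabs x < 5 * PI -> Rabs (x / n) < PI.
Proof.
  intros Hn Hx. pose proof PI_RGT_0. rewrite Rabs_div by lra. rewrite (Rabs_pos_eq n) by lra.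
  apply (Rmult_lt_reg_r n); [lra|]. unfold Rdiv. rewrite Rmult_assoc, Rinv_l by lra. nra.
Qed.

Theorem lemma3p1 :
  forall (gamma : R -> pt) (N : nat) (a b : nat -> R),
    (forall t, 0 <= t <= 1 ->
       filterlim gamma (within (fun s => 0 <= s <= 1) (locally t)) (locally (gamma t))) ->
    (forall s t, 0 <= s <= 1 -> 0 <= t <= 1 -> gamma s = gamma t -> s = t) ->
    (forall t, 0 <= t <= 1 -> gamma t <> Ppt) ->
    (forall i, (i < N)%nat -> 0 <= a i /\ a i < b i /\ b i <= 1) ->
    (forall i, (S i < N)%nat -> b i < a (S i)) ->
    (forall i, (i < N)%nat -> forall t, a i < t < b i -> nrm (gamma t) < 1) ->
    (forall i, (i < N)%nat ->
       nrm (gamma (a i)) = 1 /\ gamma (a i) <> Ppt /\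
       nrm (gamma (b i)) = 1 /\ gamma (b i) <> Ppt) ->
    forall i j, (i < N)%nat -> (j < N)%nat -> i <> j ->
      (forall z, on_arc (gamma (a i)) (gamma (b i)) z ->
                 on_arc (gamma (a j)) (gamma (b j)) z) ->
      forall li lj,
        IsMinOn (fun t => u1 (gamma t)) (a i) (b i) li ->
        IsMinOn (fun t => u1 (gamma t)) (a j) (b j) lj ->
        lj <= li.
Proof.
  intros gamma NN a b Hcont Hinj HnP Hab Hba Hin Hbd i j Hi Hj Hij Hsub li lj Hmi Hmj.
  destruct (Rle_dec lj li) as [|Hlt]; [auto|]. exfalso. apply Rnot_le_lt in Hlt.
  pose proof PI_RGT_0 as HPI.
  destruct (Hab i Hi) as [Hai [Habi Hbi]]. destruct (Hab j Hj) as [Haj [Habj Hbj]].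
  destruct (Hbd i Hi) as [Hnai [HPai [Hnbi HPbi]]]. destruct (Hbd j Hj) as [Hnaj [HPaj [Hnbj HPbj]]].
  assert (Hdisj : b i < a j \/ b j < a i).
  { destruct (Nat.lt_total i j) as [H|[H|H]]; [| contradiction |].
    - left. apply (order_ab a b NN Hab Hba); auto.
    - right. apply (order_ab a b NN Hab Hba); auto. }
  set (c := li) in *.
  destruct Hmj as [_ Hmj]. destruct Hmi as [[s0 [Hs0 Hqs0]] _]. fold c in Hqs0.
  assert (Hc1 : c < 1).
  { pose proof (Hmj (a j) ltac:(lra)). cbv beta in H. rewrite u1_bd in H by auto. lra. }
  assert (Hu : forall t, a j <= t <= b j -> c < u1 (gamma t)).
  { intros t Ht. pose proof (Hmj t Ht). cbv beta in H. lra. }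
  assert (Hs0' : a i < s0 < b i).
  { split; destruct (Req_dec s0 (a i)) as [E|E]; try (subst s0; rewrite u1_bd in Hqs0 by auto; lra);
    destruct (Req_dec s0 (b i)) as [E'|E']; try (subst s0; rewrite u1_bd in Hqs0 by auto; lra); lra. }
  set (q := gamma s0) in *.
  assert (Hq1 : nrm q < 1) by (apply (Hin i Hi); auto).
  assert (Hc0 : 0 <= c) by (rewrite <- Hqs0; apply u1_nonneg; auto).
  set (rho := nrm q) in *.
  assert (Hrho : 0 < rho).
  { destruct (Rlt_dec 0 rho); auto. assert (rho = 0) by (pose proof (nrm_ge0 q); unfold rho in *; lra).
    rewrite u1_in in Hqs0 by (unfold rho in *; lra). unfold rho in *. lra. }
  destruct (polar q Hrho) as [th0 [Hth0 Hqpol]]. fold rho in Hqpol.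
  set (x0 := gamma (a i)) in *.
  destruct (circle_polar x0 Hnai HPai) as [tx [Htx Hx0]].
  destruct (circle_polar (gamma (b i)) Hnbi HPbi) as [ty [Hty Hy0]].
  assert (Harc : on_arc (gamma (a j)) (gamma (b j)) x0).
  { apply Hsub. exists tx, ty, tx. repeat split; try lra; auto.
    unfold Rmin; destruct Rle_dec; lra. unfold Rmax; destruct Rle_dec; lra. }
  destruct Harc as [ta [tb [sig [Hta [Htb [Hga [Hgb [Hsig Hxs]]]]]]]].
  assert (Hst : Rmin ta tb < sig < Rmax ta tb).
  { assert (sig <> ta).
    { intro E. subst sig. assert (a i = a j). apply Hinj; try lra. unfold x0 in Hxs. congruence. lra. }
    assert (sig <> tb).
    { intro E. subst sig. assert (a i = b j). apply Hinj; try lra. unfold x0 in Hxs. congruence. lra. }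
    unfold Rmin, Rmax in *; destruct Rle_dec; lra. }
  assert (Htab : ta <> tb).
  { intro E. subst tb. assert (a j = b j). apply Hinj; try lra. congruence. lra. }
  set (sg := if Rlt_dec ta tb then 1 else -1).
  set (gt := fun t => gamma (clamp t)).
  assert (Hgt : pc gt) by (apply gamma_pc; auto).
  assert (Hgte : forall t, 0 <= t <= 1 -> gt t = gamma t) by (intros; unfold gt; rewrite clamp_id; auto).
  set (G := fun s => gt (a j + s * (b j - a j))).
  assert (HGpc : pc G).
  { destruct Hgt as [H1 H2]. split; apply (C1_comp (fun s => a j + s * (b j - a j)) (fun t => _ (gt t)));
    auto; apply C1_plus; [apply C1_const | apply C1_mult; [apply C1_id | apply C1_const] | apply C1_const | apply C1_mult; [apply C1_id | apply C1_const]]. }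
  assert (HGe : forall s, 0 <= s <= 1 -> exists t, a j <= t <= b j /\ G s = gamma t).
  { intros s Hs. exists (a j + s * (b j - a j)). split. nra. unfold G. apply Hgte. nra. }
  assert (HGn : forall s, 0 <= s <= 1 -> nrm (G s) <= 1).
  { intros s Hs. destruct (HGe s Hs) as [t [Ht E]]. rewrite E.
    destruct (Req_dec t (a j)). subst; lra. destruct (Req_dec t (b j)). subst; lra.
    left. apply (Hin j Hj). lra. }
  set (Aa := arcf ta (tb - ta)).
  set (Ar := fun s => Aa (1 - s)).
  set (Bb := arcf tb (ta + 2 * PI * sg - tb)).
  assert (HApc : pc Aa) by apply arcf_pc.
  assert (HBpc : pc Bb) by apply arcf_pc.
  assert (HArpc : pc Ar).
  { destruct HApc as [H1 H2]. split; apply (C1_comp (fun s => 1 - s) (fun t => _ (Aa t)));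
    auto; apply C1_minus; [apply C1_const | apply C1_id | apply C1_const | apply C1_id]. }
  assert (Hsg : sg = 1 \/ sg = -1) by (unfold sg; destruct Rlt_dec; auto).
  assert (Hcyc : forall t, (cos (t + 2 * PI * sg), sin (t + 2 * PI * sg)) = (cos t, sin t)).
  { intros t. destruct Hsg as [E|E]; rewrite E.
    - replace (t + 2 * PI * 1) with (t + 2 * PI) by ring. rewrite cos_plus, sin_plus, cos_2PI, sin_2PI. f_equal; ring.
    - replace (t + 2 * PI * -1) with (t - 2 * PI) by ring. rewrite cos_minus, sin_minus, cos_2PI, sin_2PI. f_equal; ring. }
  assert (EG0 : G 0 = (cos ta, sin ta)).
  { unfold G. rewrite Hgte by lra. rewrite <- Hga. f_equal. ring. }
  assert (EG1 : G 1 = (cos tb, sin tb)).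
  { unfold G. rewrite Hgte by lra. rewrite <- Hgb. f_equal. ring. }
  assert (EA0 : Aa 0 = (cos ta, sin ta)) by (unfold Aa, arcf; f_equal; f_equal; ring).
  assert (EA1 : Aa 1 = (cos tb, sin tb)) by (unfold Aa, arcf; f_equal; f_equal; ring).
  assert (EB0 : Bb 0 = (cos tb, sin tb)) by (unfold Bb, arcf; f_equal; f_equal; ring).
  assert (EB1 : Bb 1 = (cos ta, sin ta)).
  { unfold Bb, arcf. rewrite <- (Hcyc ta). f_equal; f_equal; ring. }
  assert (ER0 : Ar 0 = (cos tb, sin tb)) by (unfold Ar; rewrite Rminus_0_r; auto).
  assert (ER1 : Ar 1 = (cos ta, sin ta)) by (unfold Ar; rewrite Rminus_diag_eq by auto; auto).
  assert (Hconst : forall p : pt, pc (fun _ => p)) by (intros p; split; apply C1_const).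
  destruct (curve_dist (fun _ => x0) G (Hconst x0) HGpc) as [dG0 [HdG0 HdG0']].
  { intros s t _ Ht E. destruct (HGe t Ht) as [t' [Ht' E']]. rewrite E' in E. unfold x0 in E.
    assert (a i = t') by (apply Hinj; auto; lra). lra. }
  destruct (curve_dist (fun _ => x0) Bb (Hconst x0) HBpc) as [dB0 [HdB0 HdB0']].
  { intros s t _ Ht E. rewrite Hxs in E. unfold Bb, arcf in E. injection E. intros E2 E1.
    set (phi := tb + t * (ta + 2 * PI * sg - tb)) in *.
    assert (Hc : cos (phi - sig) = 1).
    { rewrite cos_minus, <- E1, <- E2. pose proof (sin2_cos2 sig). unfold Rsqr in H. lra. }
    unfold sg in phi. unfold Rmin, Rmax in Hst. destruct (Rlt_dec ta tb); destruct (Rle_dec ta tb); try lra.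
    - assert (phi - sig = 0) by (apply cos1_0; auto; unfold phi; nra). unfold phi in *. nra.
    - assert (phi - sig = 0) by (apply cos1_0; auto; unfold phi; nra). unfold phi in *. nra. }
  set (d0 := Rmin (Rmin dG0 dB0) 1).
  assert (Hd0 : 0 < d0) by (unfold d0, Rmin; repeat destruct Rle_dec; lra).
  assert (Hd0G : d0 <= dG0) by (unfold d0, Rmin; repeat destruct Rle_dec; lra).
  assert (Hd0B : d0 <= dB0) by (unfold d0, Rmin; repeat destruct Rle_dec; lra).
  assert (Hd01 : d0 <= 1) by (unfold d0, Rmin; repeat destruct Rle_dec; lra).
  destruct (gamma_cont gamma Hcont (a i) (d0 / 12) ltac:(lra)) as [del [Hdel Hdel']].
  set (eta := Rmin (del / 2) ((s0 - a i) / 2)).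
  assert (Heta : 0 < eta /\ eta < del /\ a i + eta < s0).
  { unfold eta, Rmin; destruct Rle_dec; lra. }
  set (w := gamma (a i + eta)).
  assert (Hwx0 : dst w x0 <= d0 / 6).
  { destruct (Hdel' (a i + eta) ltac:(rewrite Rabs_pos_eq; lra)) as [E1 E2].
    rewrite !clamp_id in E1, E2 by lra. pose proof (dst_le_abs w x0). unfold w, x0 in *. lra. }
  assert (Hw1 : nrm w < 1) by (apply (Hin i Hi); lra).
  assert (Hw0 : 5/6 <= nrm w).
  { pose proof (nrm_le_dst x0 w) as T. rewrite (dst_sym x0 w) in T. lra. }
  set (W1 := fun s => gt (a i + eta + s * (s0 - (a i + eta)))).
  assert (HW1pc : pc W1).
  { destruct Hgt as [H1 H2]. split; apply (C1_comp (fun s => a i + eta + s * (s0 - (a i + eta))) (fun t => _ (gt t)));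
    auto; apply C1_plus; [apply C1_const | apply C1_mult; [apply C1_id | apply C1_const] | apply C1_const | apply C1_mult; [apply C1_id | apply C1_const]]. }
  assert (HW1e : forall s, 0 <= s <= 1 -> exists t, a i < t < b i /\ W1 s = gamma t).
  { intros s Hs. exists (a i + eta + s * (s0 - (a i + eta))). split. nra. unfold W1. apply Hgte. nra. }
  assert (HW10 : W1 0 = w) by (unfold W1, w; rewrite Hgte by lra; f_equal; ring).
  assert (HW11 : W1 1 = q) by (unfold W1, q; rewrite Hgte by lra; f_equal; ring).
  set (th := fun s => th0 + s * (PI - th0)).
  set (W2 := fun s => (rho * cos (th s), rho * sin (th s))).
  assert (HW2pc : pc W2).
  { unfold W2, th. split; cbn [fst snd]; apply C1_mult; try apply C1_const; [apply C1_cos | apply C1_sin];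
    (apply C1_plus; [apply C1_const | apply C1_mult; [apply C1_id | apply C1_const]]). }
  assert (HW2n : forall s, nrm (W2 s) = rho) by (intros; unfold W2; apply nrm_polar; lra).
  assert (HW20 : W2 0 = q) by (unfold W2, th; rewrite Hqpol; f_equal; f_equal; f_equal; ring).
  assert (HW21 : W2 1 = (- rho, 0)).
  { unfold W2, th. replace (th0 + 1 * (PI - th0)) with PI by ring. rewrite cos_PI, sin_PI. f_equal; ring. }
  assert (HW2u : forall s, 0 <= s <= 1 -> u1 (W2 s) <= c).
  { intros s Hs. destruct (Rle_dec rho (1/2)).
    - rewrite u1_in by (rewrite HW2n; auto). rewrite HW2n. rewrite <- Hqs0, u1_in by auto. fold rho. lra.
    - assert (Hth : 0 <= th s <= 2 * PI) by (unfold th; nra).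
      rewrite (u1_ann (W2 s) (th s)); try rewrite HW2n; auto; try lra.
      rewrite <- Hqs0, (u1_ann q th0); auto; fold rho; try lra.
      replace (PI - th s) with ((1 - s) * (PI - th0)) by (unfold th; ring).
      rewrite Rabs_mult, (Rabs_pos_eq (1 - s)) by lra.
      pose proof (kk_pos rho ltac:(lra)). pose proof (Rabs_pos (PI - th0)).
      assert (kk rho * ((1 - s) * Rabs (PI - th0)) <= kk rho * Rabs (PI - th0)) by (assert (0 <= kk rho * Rabs (PI - th0) * s) by (apply Rmult_le_pos; [apply Rmult_le_pos|]; lra); nra).
      unfold Rmin; repeat destruct Rle_dec; lra. }
  set (W3 := fun s => (- rho - 2 * s, 0)).
  assert (HW3pc : pc W3).
  { unfold W3; split; cbn [fst snd]. apply C1_minus. apply C1_const. apply C1_mult. apply C1_const. apply C1_id. apply C1_const. }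
  assert (HW3u : forall s, 0 <= s <= 1 -> W3 s <> Ppt -> u1 (W3 s) <= c).
  { intros s Hs HP. unfold W3. set (x := rho + 2 * s).
    replace (- rho - 2 * s) with (- x) by (unfold x; ring).
    assert (Hn : nrm (- x, 0) = x) by (rewrite nrm_x0; rewrite Rabs_left1; unfold x; lra).
    destruct (Rle_dec x (1/2)).
    - rewrite u1_in by lra. rewrite Hn. rewrite <- Hqs0, u1_in by (unfold x in *; fold rho; lra). fold rho. unfold x in *. lra.
    - destruct (Rlt_dec x 1).
      + rewrite (u1_ann (- x, 0) PI); rewrite ?Hn; try lra.
        replace (PI - PI) with 0 by ring. rewrite Rabs_R0, Rmult_0_r. unfold Rmin; destruct Rle_dec; lra.
        rewrite cos_PI, sin_PI. f_equal; ring.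
      + destruct (Req_dec x 1).
        * exfalso. apply HP. unfold W3, Ppt. f_equal. unfold x in *. lra.
        * rewrite u1_out; lra. }
  assert (HArn : forall s, nrm (Ar s) = 1) by (intros; unfold Ar, Aa; apply arcf_nrm).
  assert (HAan : forall s, nrm (Aa s) = 1) by (intros; unfold Aa; apply arcf_nrm).
  assert (HBn : forall s, nrm (Bb s) = 1) by (intros; unfold Bb; apply arcf_nrm).
  destruct (curve_dist G W1 HGpc HW1pc) as [d1G [Hd1G Hd1G']].
  { intros s t Hs Ht E. destruct (HGe s Hs) as [t1 [Ht1 E1]]. destruct (HW1e t Ht) as [t2 [Ht2 E2]].
    rewrite E1, E2 in E. assert (t1 = t2) by (apply Hinj; auto; lra). lra. }
  destruct (curve_dist Ar W1 HArpc HW1pc) as [d1A [Hd1A Hd1A']].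
  { intros s t Hs Ht E. destruct (HW1e t Ht) as [t2 [Ht2 E2]].
    pose proof (HArn s). rewrite E, E2 in H. pose proof (Hin i Hi t2 Ht2). lra. }
  destruct (curve_dist G W2 HGpc HW2pc) as [d2G [Hd2G Hd2G']].
  { intros s t Hs Ht E. destruct (HGe s Hs) as [t1 [Ht1 E1]].
    pose proof (HW2u t Ht). rewrite <- E, E1 in H. pose proof (Hu t1 Ht1). lra. }
  destruct (curve_dist Ar W2 HArpc HW2pc) as [d2A [Hd2A Hd2A']].
  { intros s t Hs Ht E. pose proof (HArn s). rewrite E, HW2n in H. fold rho in Hq1. lra. }
  destruct (curve_dist G W3 HGpc HW3pc) as [d3G [Hd3G Hd3G']].
  { intros s t Hs Ht E. destruct (HGe s Hs) as [t1 [Ht1 E1]].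
    destruct (classic (W3 t = Ppt)) as [EP|EP].
    - apply (HnP t1 ltac:(lra)). rewrite <- E1, E. auto.
    - pose proof (HW3u t Ht EP). rewrite <- E, E1 in H. pose proof (Hu t1 Ht1). lra. }
  destruct (curve_dist Ar W3 HArpc HW3pc) as [d3A [Hd3A Hd3A']].
  { intros s t Hs Ht E. pose proof (HArn s) as Hn. rewrite E in Hn. unfold W3 in Hn. rewrite nrm_x0 in Hn.
    unfold Ar, Aa, arcf, W3 in E. injection E. intros E2 E1.
    set (phi := ta + (1 - s) * (tb - ta)) in *.
    assert (Hphi : - PI < phi < PI).
    { unfold phi. unfold Rmin, Rmax in Hst; destruct Rle_dec; nra. }
    pose proof (cos_ne_m1 phi Hphi). rewrite Rabs_left1 in Hn by lra. lra. }
  set (dmin := Rmin (Rmin (Rmin d1G d1A) (Rmin d2G d2A)) (Rmin (Rmin d3G d3A) (Rmin (d0 / 2) (1 - nrm w)))).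
  assert (Hdmin : 0 < dmin).
  { unfold dmin. repeat apply Rmin_pos'; lra. }
  assert (Hm1G : dmin <= d1G) by (unfold dmin; repeat (apply Rmin_le_l || apply Rmin_le_r); lra).
  assert (Hm1A : dmin <= d1A).
  { unfold dmin. apply Rmin_le_l, Rmin_le_l, Rmin_le_r. lra. }
  assert (Hm2G : dmin <= d2G).
  { unfold dmin. apply Rmin_le_l, Rmin_le_r, Rmin_le_l. lra. }
  assert (Hm2A : dmin <= d2A).
  { unfold dmin. apply Rmin_le_l, Rmin_le_r, Rmin_le_r. lra. }
  assert (Hm3G : dmin <= d3G).
  { unfold dmin. apply Rmin_le_r, Rmin_le_l, Rmin_le_l. lra. }
  assert (Hm3A : dmin <= d3A).
  { unfold dmin. apply Rmin_le_r, Rmin_le_l, Rmin_le_r. lra. }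
  assert (Hm0 : dmin <= d0 / 2).
  { unfold dmin. apply Rmin_le_r, Rmin_le_r, Rmin_le_l. lra. }
  assert (Hmw : dmin <= 1 - nrm w).
  { unfold dmin. apply Rmin_le_r, Rmin_le_r, Rmin_le_r. lra. }
  destruct (mesh G HGpc dmin Hdmin) as [NG HNG].
  destruct (mesh Aa HApc dmin Hdmin) as [NA HNA].
  destruct (mesh Ar HArpc dmin Hdmin) as [NR HNR].
  destruct (mesh Bb HBpc dmin Hdmin) as [NB HNB].
  set (N := (NG + NA + NR + NB + 5)%nat).
  assert (HN : (0 < N)%nat) by (unfold N; lia).
  assert (HN5 : 5 <= INR N).
  { replace 5 with (INR 5) by (simpl; ring). apply le_INR. unfold N; lia. }
  specialize (HNG N ltac:(unfold N; lia) HN). specialize (HNA N ltac:(unfold N; lia) HN).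
  specialize (HNR N ltac:(unfold N; lia) HN). specialize (HNB N ltac:(unfold N; lia) HN).
  set (vC := cat (samp G N) (samp Ar N) N).
  set (vC' := cat (samp G N) (samp Bb N) N).
  set (vO := cat (samp Aa N) (samp Bb N) N).
  assert (JC : samp G N N = samp Ar N O) by (rewrite samp_N, samp_0 by auto; congruence).
  assert (JC' : samp G N N = samp Bb N O) by (rewrite samp_N, samp_0 by auto; congruence).
  assert (JO : samp Aa N N = samp Bb N O) by (rewrite samp_N, samp_0 by auto; congruence).
  assert (CC : vC (N + N)%nat = vC O).
  { unfold vC. rewrite cat_hi, cat_lo by (auto; lia). rewrite samp_N, samp_0 by auto. congruence. }
  assert (CC' : vC' (N + N)%nat = vC' O).
  { unfold vC'. rewrite cat_hi, cat_lo by (auto; lia). rewrite samp_N, samp_0 by auto. congruence. }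
  assert (CO : vO (N + N)%nat = vO O).
  { unfold vO. rewrite cat_hi, cat_lo by (auto; lia). rewrite samp_N, samp_0 by auto. congruence. }
  assert (HNN : (0 < N + N)%nat) by lia.
  assert (VC1 : forall s, 0 <= s <= 1 -> forall k, (k < N + N)%nat -> valid (W1 s) (vC k) (vC (S k))).
  { intros s Hs. apply step_cat; auto.
    - apply valid_from with (d := dmin); auto. intros t Ht. pose proof (Hd1G' t s Ht Hs). lra.
    - apply valid_from with (d := dmin); auto. intros t Ht. pose proof (Hd1A' t s Ht Hs). lra. }
  assert (E1 : ws vC (N + N) w = ws vC (N + N) q).
  { rewrite <- HW10, <- HW11. apply ws_path; auto. }
  assert (VC2 : forall s, 0 <= s <= 1 -> forall k, (k < N + N)%nat -> valid (W2 s) (vC k) (vC (S k))).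
  { intros s Hs. apply step_cat; auto.
    - apply valid_from with (d := dmin); auto. intros t Ht. pose proof (Hd2G' t s Ht Hs). lra.
    - apply valid_from with (d := dmin); auto. intros t Ht. pose proof (Hd2A' t s Ht Hs). lra. }
  assert (E2 : ws vC (N + N) q = ws vC (N + N) (- rho, 0)).
  { rewrite <- HW20, <- HW21. apply ws_path; auto. }
  (* step 3: cut at (-rho, 0) *)
  assert (Hray3 : forall v, nrm v <= 1 -> (forall t, 0 <= t <= 1 -> dmin <= dst v (W3 t)) ->
            forall m, 0 <= m -> dmin <= dst v (fst (- rho, 0) - m * fst (1, 0), snd (- rho, 0) + m * snd (1, 0))).
  { intros v Hv Hb m Hm. cbn [fst snd].
    destruct (Rle_dec m 2).
    - replace (- rho - m * 1, 0 + m * 0) with (W3 (m / 2)) by (unfold W3; f_equal; field).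
      apply Hb. lra.
    - pose proof (nrm_le_dst (- rho - m * 1, 0 + m * 0) v) as T. rewrite dst_sym in T.
      replace (0 + m * 0) with 0 in T by ring. replace (0 + m * 0) with 0 by ring.
      rewrite nrm_x0, Rabs_left1 in T by lra. unfold dmin in *. lra. }
  assert (Hu0 : nrm (1, 0) = 1) by (rewrite nrm_x0; apply Rabs_R1).
  assert (E3 : ws vC (N + N) (- rho, 0) = 0).
  { apply ws_cut with (u := (1, 0)); auto.
    - intros k Hk. rewrite <- HW21. apply VC2; auto; lra.
    - intros k Hk. apply (step_cat (fun a0 b0 => forall l, 0 <= l <= 1 ->
        ~ (snd (cmul (comb l (psub a0 (- rho, 0)) (psub b0 (- rho, 0))) (1, 0)) = 0 /\
           fst (cmul (comb l (psub a0 (- rho, 0)) (psub b0 (- rho, 0))) (1, 0)) <= 0))); auto.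
      + apply seg_from with (d := dmin); auto. intros t Ht. apply Hray3. apply HGn; auto.
        intros t' Ht'. pose proof (Hd3G' t t' Ht Ht'). lra.
      + apply seg_from with (d := dmin); auto. intros t Ht. apply Hray3. rewrite HArn; lra.
        intros t' Ht'. pose proof (Hd3A' t t' Ht Ht'). lra. }
  (* step 4: cut for C' at w, radially outward *)
  assert (Hwpos : 0 < nrm w) by lra.
  set (uw := (- fst w / nrm w, snd w / nrm w)).
  assert (Huw : nrm uw = 1).
  { unfold uw. replace (- fst w / nrm w, snd w / nrm w) with (/ nrm w * fst (- fst w, snd w), / nrm w * snd (- fst w, snd w))
      by (cbn [fst snd]; f_equal; field; lra).
    rewrite nrm_scale by (left; apply Rinv_0_lt_compat; lra).
    replace (nrm (- fst w, snd w)) with (nrm w). field. lra.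
    unfold nrm; cbn [fst snd]. f_equal. ring. }
  assert (Hray4 : forall v, nrm v <= 1 -> d0 <= dst v x0 ->
            forall m, 0 <= m -> dmin <= dst v (fst w - m * fst uw, snd w + m * snd uw)).
  { intros v Hv Hvx m Hm.
    replace (fst w - m * fst uw, snd w + m * snd uw) with ((1 + m / nrm w) * fst w, (1 + m / nrm w) * snd w)
      by (unfold uw; cbn [fst snd]; f_equal; field; lra).
    pose proof (ray_bound x0 w v (d0 / 6) d0 (1 + m / nrm w) Hnai Hwpos ltac:(lra) Hwx0 Hv Hvx).
    assert (0 <= m / nrm w) by (apply Rdiv_le_0_compat; lra).
    specialize (H ltac:(lra)). lra. }
  assert (HGx0 : forall t, 0 <= t <= 1 -> d0 <= dst (G t) x0).
  { intros t Ht. rewrite dst_sym. pose proof (HdG0' 0 t ltac:(lra) Ht). cbv beta in H. lra. }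
  assert (HBx0 : forall t, 0 <= t <= 1 -> d0 <= dst (Bb t) x0).
  { intros t Ht. rewrite dst_sym. pose proof (HdB0' 0 t ltac:(lra) Ht). cbv beta in H. lra. }
  assert (Hwm0 : w = (fst w - 0 * fst uw, snd w + 0 * snd uw)) by (destruct w; cbn [fst snd]; f_equal; ring).
  assert (E4 : ws vC' (N + N) w = 0).
  { apply ws_cut with (u := uw); auto.
    - apply step_cat; auto.
      + apply valid_from with (d := dmin); auto. intros t Ht. rewrite Hwm0 at 1.
        apply Hray4; auto; lra.
      + apply valid_from with (d := dmin); auto. intros t Ht. rewrite Hwm0 at 1.
        apply Hray4; auto; try lra. rewrite HBn; lra.
    - intros k Hk. apply (step_cat (fun a0 b0 => forall l, 0 <= l <= 1 ->
        ~ (snd (cmul (comb l (psub a0 w) (psub b0 w)) uw) = 0 /\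
           fst (cmul (comb l (psub a0 w) (psub b0 w)) uw) <= 0))); auto.
      all: apply seg_from with (d := dmin); auto; intros t Ht; apply Hray4; auto; rewrite ?HBn; lra. }
  set (W5 := fun s => (s * fst w, s * snd w)).
  assert (HW5pc : pc W5).
  { unfold W5; split; cbn [fst snd]; apply C1_mult; try apply C1_id; apply C1_const. }
  assert (HW5b : forall (f : R -> pt), (forall t, nrm (f t) = 1) -> forall s t, 0 <= s <= 1 -> dmin <= dst (f t) (W5 s)).
  { intros f Hf s0' t Hs. pose proof (nrm_le_dst (f t) (W5 s0')) as T. rewrite Hf in T.
    unfold W5 in T. rewrite nrm_scale in T by lra. unfold W5. assert (s0' * nrm w <= nrm w) by nra. lra. }
  assert (HW50 : W5 0 = (0, 0)) by (unfold W5; f_equal; ring).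
  assert (HW51 : W5 1 = w) by (unfold W5; destruct w; cbn [fst snd]; f_equal; ring).
  assert (VO : forall s, 0 <= s <= 1 -> forall k, (k < N + N)%nat -> valid (W5 s) (vO k) (vO (S k))).
  { intros s Hs. apply step_cat; auto.
    all: apply valid_from with (d := dmin); auto; intros t Ht; apply HW5b; auto. }
  assert (E5 : ws vO (N + N) (0, 0) = ws vO (N + N) w).
  { rewrite <- HW50, <- HW51. apply ws_path; auto. }
  assert (E6 : ws vO (N + N) (0, 0) = 2 * PI * sg).
  { unfold vO. rewrite ws_cat by auto. unfold Aa, Bb. rewrite !ws_arc0; auto.
    - ring.
    - apply small_div; auto. destruct Hsg as [E|E]; rewrite E; unfold Rabs; destruct Rcase_abs; lra.
    - apply small_div; auto. unfold Rabs; destruct Rcase_abs; lra. }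
  assert (VAw : forall k, (k < N)%nat -> valid w (samp Aa N k) (samp Aa N (S k))).
  { apply valid_from with (d := dmin); auto. intros t Ht. rewrite <- HW51. apply HW5b; auto; lra. }
  assert (ERA : ws (samp Ar N) N w = - ws (samp Aa N) N w).
  { rewrite <- (ws_rev (samp Aa N) N w VAw). apply ws_ext. intros k Hk.
    unfold samp, Ar. f_equal. rewrite minus_INR by lia. field. apply not_0_INR. lia. }
  assert (DC : ws vC (N + N) w = ws (samp G N) N w + ws (samp Ar N) N w) by (unfold vC; apply ws_cat; auto).
  assert (DC' : ws vC' (N + N) w = ws (samp G N) N w + ws (samp Bb N) N w) by (unfold vC'; apply ws_cat; auto).
  assert (DO : ws vO (N + N) w = ws (samp Aa N) N w + ws (samp Bb N) N w) by (unfold vO; apply ws_cat; auto).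
  destruct Hsg as [E|E]; rewrite E in E6; lra.
Qed.
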